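(* In the setting of problem (CP1) and the prox-ADC method described in the context, suppose Assumptions 1–6 hold and let $\{x^k\}$ be generated by the method. (a) If a subsequence $\{x^{k+1}\}_{k\in N}$ ($N\subset\mathbb{N}$ infinite) converges to some $\bar x$ and $\partial^\infty_Af_p(\bar x)=\{0\}$ for $p\in I_2$, then $\{Y^k(x^{k+1})\}_{k\in N}$ is equi-bounded (all contained in one bounded set). (b) If $\{x^k\}$ is bounded and $\partial_A^\infty f_p(x)=\{0\}$ for every $x\in\bigcap_{p=1}^m\operatorname{dom}F_p$ and every $p\in I_2$, then $\{Y^k(x^{k+1})\}$ is equi-bounded, i.e. $D:=\sup_{k\in\mathbb{N}}\sup_{y\in Y^k(x^{k+1})}\|y\|<+\infty$.
   Context: Problem (CP1): integers $0\le m_1\le m$; $f_p:\mathbb{R}^n\to\mathbb{R}$; $\varphi_p:\mathbb{R}\to\mathbb{R}$ convex for $p\le m_1$; $\varphi_p=\delta_{(-\infty,0]}$ for $p>m_1$; $F_p=\varphi_p\circ f_p$. $I_1=\{p:\varphi_p$ nondecreasing$\}$, $I_2$ its complement. Monotonic decomposition $\varphi_p=\varphi^\uparrow_p+\varphi^\downarrow_p$: $(\varphi_p,0)$ if nondecreasing; $(0,\varphi_p)$ if nonincreasing; otherwise with minimizer $z^*$, $\varphi_p^\uparrow=\varphi_p(z^* )$ on $z\le z^*$, $\varphi_p$ on $z>z^*$; $\varphi^\downarrow_p=\varphi_p-\varphi_p(z^* )$ on $z\le z^*$, $0$ on $z>z^*$. Assumption 1: $f_p^k=g_p^k-h_p^k$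 ($g_p^k,h_p^k:\mathbb{R}^n\to\mathbb{R}$ convex), $f_p^k$ epi-converges to $f_p$; $-\infty<\liminf_{x'\to x,k\to\infty}f_p^k(x')\le\limsup_{x'\to x,k\to\infty}f_p^k(x')<\infty$ $\forall x$; $\varphi_p\circ f_p^k$ epi-converges to $\varphi_p\circ f_p$. Assumption 2: $X^k=\{x:f_p^k(x)\le0,p>m_1\}$, $\alpha_p^k=\sup_{X^k}[f_p^{k+1}-f^k_p]_+$; there are $x^0$, nonnegative $\widehat\alpha_p^k\ge\alpha_p^k$ ($p>m_1$) with $\sum_{k'}\widehat\alpha_p^{k'}<\infty$, $f_p^0(x^0)\le-\sum_{k'}\widehat\alpha_p^{k'}$; $\widehat\alpha_p^k=0$ for $p\le m_1$. Assumption 3: $\exists\ell_k>0$: $\min\{\mathbb H(\partial g_p^k(x),\partial g_p^k(x')),\mathbb H(\partial h_p^k(x),\partial h_p^k(x'))\}\le\ell_k\|x-x'\|$ $\forall x,x',p$. Assumption 4: each $\sum_{p\le m_1}\varphi_p(f^k_p)+\sum_{p>m_1}\delta_{(-\infty,0]}(f^k_p)$ is level-bounded. Assumption 5: for every $\bar x\in\bigcap_p\operatorname{dom}F_p$, if $0=\sum_py_pv_p$ with $(y_p,v_p)\in(\bigcup\{\mathcal N_{\operatorname{dom}\varphi_p}(t):t\in T_p(\bar x)\}\times\operatorname{con}\partial_Af_p(\bar x))\cup(\mathbb{R}\times[\partial_A^\infty f_p(\bar x)\setminus\{0\}])$ for each $p$, then all $y_p=0$; here $T_p(x)=\{t:\exists$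 infinite $N$, $x^k\to x$, $f^k_p(x^k)\to_Nt\}$, $\partial_Af_p(\bar x)=\bigcup_{x^k\to\bar x}\operatorname{Lim\,sup}_k[\partial g_p^k(x^k)-\partial h_p^k(x^k)]$, $\partial^\infty_Af_p(\bar x)=\bigcup_{x^k\to\bar x}\operatorname{Lim\,sup}^\infty_k[\partial g_p^k(x^k)-\partial h_p^k(x^k)]$ (outer limit $\{u:\exists$ infinite $N$, $u^k\in C^k$, $u^k\to_Nu\}$; horizon outer limit $\{0\}\cup\{u:\exists$ infinite $N,\lambda_k\downarrow0,u^k\in C^k,\lambda_ku^k\to_Nu\}$). Method: $\lambda>0$, positive $\epsilon_k\downarrow0,\delta_k\downarrow0$ with $\delta_k/(\lambda+\ell_k)\downarrow0$, $\sigma^k_p=\sum_{k'\ge k}\widehat\alpha^{k'}_p$; at $y$ pick $a_p\in\partial h^k_p(y)$, $b_p\in\partial g^k_p(y)$; $f^{k,\mathrm{up}}_p(x;y)=g^k_p(x)-h_p^k(y)-a_p^\top(x-y)+\sigma_p^k$; $f_p^{k,\mathrm{lo}}(x;y)=g_p^k(y)+b_p^\top(x-y)-h_p^k(x)$; $\widehat F_p^k(x;y)=\varphi_p^\uparrow(f^{k,\mathrm{up}}_p(x;y))+\varphi_p^\downarrow(f^{k,\mathrm{lo}}_p(x;y))$. Subproblem at $y$: $\operatorname{argmin}\{\sum_{p\le m_1}\widehat F^k_p(x;y)+\frac\lambda2\|x-y\|^2:f^{k,\mathrm{up}}_p(x;y)\le0,p>m_1\}$. Iterates: $x^{k,0}=x^k$,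 $x^{k,i+1}$ = subproblem solution at $y=x^{k,i}$; $i_k$ first $i$ with $f_p^{k,\mathrm{up}}(x^{k,i+1};x^{k,i})\le f_p^k(x^{k,i+1})+\sigma_p^k+\epsilon_k$ $\forall p$, $f_p^{k,\mathrm{lo}}(x^{k,i+1};x^{k,i})\ge f_p^k(x^{k,i+1})-\epsilon_k$ for $p\in I_2$, $\|x^{k,i+1}-x^{k,i}\|\le\delta_k/(\lambda+\ell_k)$; $x^{k+1}=x^{k,i_k}$. Assumption 6: for all $k$ and every pair $(x',x'')$ with $x''$ the subproblem solution at $y=x'$, if $y_p\in\mathcal N_{(-\infty,0]}(f^{k,\mathrm{up}}_p(x'';x'))$ ($p>m_1$) satisfy $0\in\sum_{p>m_1}y_p\partial f_p^{k,\mathrm{up}}(x'';x')$, then all these $y_p=0$. $Y^k(x^{k+1})$: set of $(y_{1,1},y_{1,2},\dots,y_{m,1},y_{m,2})$ with $0\in\sum_p[y_{p,1}\partial f^{k,\mathrm{up}}_p(x^{k,i_k+1};x^{k,i_k})+y_{p,2}\partial f_p^{k,\mathrm{lo}}(x^{k,i_k+1};x^{k,i_k})]+\lambda(x^{k,i_k+1}-x^{k,i_k})$, $y_{p,1}\in\partial\varphi_p^\uparrow(f_p^{k,\mathrm{up}}(x^{k,i_k+1};x^{k,i_k}))$, $y_{p,2}\in\partial\varphi_p^\downarrow(f_p^{k,\mathrm{lo}}(x^{k,i_k+1};x^{k,i_k}))$. *)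

(* Defs.v *)
From HB Require Import structures.
From mathcomp Require Import all_boot all_order all_algebra.
From mathcomp Require Import boolp classical_sets reals constructive_ereal.

Set Implicit Arguments.
Unset Strict Implicit.
Unset Printing Implicit Defensive.

Import Order.TTheory GRing.Theory Num.Theory.
Local Open Scope ring_scope.
Local Open Scope classical_set_scope.

Section Generic.
Context {R : realType} {n : nat}.
Local Notation vec := 'rV[R]_n.

Definition dot (u v : vec) : R := \sum_(i < n) u 0 i * v 0 i.
Definition vnorm (v : vec) : R := Num.sqrt (dot v v).

Definition convex_fun (g : vec -> R) : Prop :=
  forall (x y : vec) (t : R), 0 <= t <= 1 ->
    g (t *: x + (1 - t) *: y) <= t * g x + (1 - t) * g y.

Definition csubdiff (g : vec -> R) (x : vec) : set vec :=
  [set v | forall z, g x + dot v (z - x) <= g z].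

Definition supdiff (g : vec -> R) (x : vec) : set vec :=
  [set v | csubdiff (fun z => - g z) x (- v)].

Definition vcvg (xs : nat -> vec) (x : vec) : Prop :=
  forall e : R, 0 < e -> exists K, forall k, (K <= k)%N -> vnorm (xs k - x) < e.

Definition bounded_set (A : set vec) : Prop :=
  exists M : R, forall x, A x -> vnorm x <= M.

Definition hausdorff_le (A B : set vec) (c : R) : Prop :=
  (forall a, A a -> forall e : R, 0 < e -> exists b, B b /\ vnorm (a - b) < c + e) /\
  (forall b, B b -> forall e : R, 0 < e -> exists a, A a /\ vnorm (b - a) < c + e).

Definition conv_hull (A : set vec) : set vec :=
  [set v | exists (q : nat) (w : 'I_q -> R) (a : 'I_q -> vec),
      (forall i, A (a i)) /\ (forall i, 0 <= w i) /\ \sum_(i < q) w i = 1 /\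
      v = \sum_(i < q) w i *: a i].

Definition msub (A B : set vec) : set vec :=
  [set v | exists a b, A a /\ B b /\ v = a - b].

Definition level_bounded (F : vec -> \bar R) : Prop :=
  forall a : R, bounded_set [set x | (F x <= a%:E)%E].

Definition epi_cvg (Fk : nat -> vec -> \bar R) (F : vec -> \bar R) : Prop :=
  forall x,
    (forall xs, vcvg xs x -> forall a : R, (a%:E < F x)%E ->
        exists K, forall k, (K <= k)%N -> (a%:E < Fk k (xs k))%E) /\
    (exists xs, vcvg xs x /\ forall a : R, (F x < a%:E)%E ->
        exists K, forall k, (K <= k)%N -> (Fk k (xs k) < a%:E)%E).

End Generic.

Section Scalar.
Context {R : realType}.

Definition rcvg (u : nat -> R) (l : R) : Prop :=
  forall e : R, 0 < e -> exists K, forall k, (K <= k)%N -> `|u k - l| < e.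

(* an infinite index set N, given as a strictly increasing enumeration *)
Definition subseq_idx (s : nat -> nat) : Prop := forall j, (s j < s j.+1)%N.

Definition convex_rfun (phi : R -> R) : Prop :=
  forall (x y t : R), 0 <= t <= 1 ->
    phi (t * x + (1 - t) * y) <= t * phi x + (1 - t) * phi y.

Definition enondecr (psi : R -> \bar R) : Prop :=
  forall s t, s <= t -> (psi s <= psi t)%E.
Definition enonincr (psi : R -> \bar R) : Prop :=
  forall s t, s <= t -> (psi t <= psi s)%E.

(* monotonic decomposition psi = psi_up + psi_down (see context) *)
Definition minimizer (psi : R -> \bar R) : R :=
  xget 0 [set z | forall s, (psi z <= psi s)%E].

Definition phi_up (psi : R -> \bar R) : R -> \bar R := fun z =>
  if pselect (enondecr psi) then psi z
  else if pselect (enonincr psi) then 0%E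
  else if z <= minimizer psi then psi (minimizer psi) else psi z.

Definition phi_down (psi : R -> \bar R) : R -> \bar R := fun z =>
  if pselect (enondecr psi) then 0%E
  else if pselect (enonincr psi) then psi z
  else if z <= minimizer psi then (psi z - psi (minimizer psi))%E else 0%E.

Definition esubdiff (psi : R -> \bar R) (t : R) : set R :=
  [set y | psi t \is a fin_num /\ forall s, (psi t + (y * (s - t))%:E <= psi s)%E].

Definition edom (psi : R -> \bar R) : set R := [set z | (psi z < +oo)%E].

(* normal cone of a convex set C of R at t (empty if t is not in C) *)
Definition ncone (C : set R) (t : R) : set R :=
  [set y | C t /\ forall s, C s -> y * (s - t) <= 0].

End Scalar.

Section Limits.
Context {R : realType} {n : nat}.
Local Notation vec := 'rV[R]_n.

Definition outer_limit (C : nat -> set vec) : set vec :=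
  [set u | exists s, subseq_idx s /\
     exists us : nat -> vec, (forall j, C (s j) (us j)) /\ vcvg us u].

Definition horizon_outer_limit (C : nat -> set vec) : set vec :=
  [set u | u = 0 \/
     exists s, subseq_idx s /\
     exists lam : nat -> R, (forall k, 0 < lam k) /\ (forall k, lam k.+1 <= lam k) /\
       rcvg lam 0 /\
     exists us : nat -> vec, (forall j, C (s j) (us j)) /\
       vcvg (fun j => lam (s j) *: us j) u].
End Limits.

(* Problem (CP1) data.  Indices p : 'I_m are 0-based: the paper's p <= m1   *)
(* corresponds to (p < m1)%N.                                              *)
Unset Implicit Arguments.

Record cp1 (R : realType) (n : nat) := CP1 {
  cp_m : nat;
  cp_m1 : nat;
  cp_f : 'I_cp_m -> 'rV[R]_n -> R;
  cp_phi : 'I_cp_m -> R -> R;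
  cp_g : nat -> 'I_cp_m -> 'rV[R]_n -> R;
  cp_h : nat -> 'I_cp_m -> 'rV[R]_n -> R
}.
Arguments cp_m {R n} c.
Arguments cp_m1 {R n} c.
Arguments cp_f {R n} c _ _.
Arguments cp_phi {R n} c _ _.
Arguments cp_g {R n} c _ _ _.
Arguments cp_h {R n} c _ _ _.

Section Problem.
Context {R : realType} {n : nat} (P : cp1 R n).
Local Notation vec := 'rV[R]_n.
Local Notation m := (cp_m P).
Local Notation m1 := (cp_m1 P).

Definition is_obj (p : 'I_m) : bool := (p < m1)%N.

Definition Phi (p : 'I_m) : R -> \bar R := fun z =>
  if is_obj p then (cp_phi P p z)%:E else (if z <= 0 then 0%E else +oo%E).

Definition Fp (p : 'I_m) (x : vec) : \bar R := Phi p (cp_f P p x).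

Definition fk (k : nat) (p : 'I_m) (x : vec) : R := cp_g P k p x - cp_h P k p x.

Definition I1 (p : 'I_m) : Prop := enondecr (Phi p).
Definition I2 (p : 'I_m) : Prop := ~ I1 p.

Definition dom_all (x : vec) : Prop := forall p, (Fp p x < +oo)%E.

Definition Tset (p : 'I_m) (x : vec) : set R :=
  [set t | exists s, subseq_idx s /\ exists xs : nat -> vec, vcvg xs x /\
      rcvg (fun j => fk (s j) p (xs (s j))) t].

Definition dC (p : 'I_m) (xs : nat -> vec) (k : nat) : set vec :=
  msub (csubdiff (cp_g P k p) (xs k)) (csubdiff (cp_h P k p) (xs k)).

Definition dA (p : 'I_m) (xbar : vec) : set vec :=
  [set u | exists xs, vcvg xs xbar /\ outer_limit (dC p xs) u].

Definition dAinf (p : 'I_m) (xbar : vec) : set vec :=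
  [set u | exists xs, vcvg xs xbar /\ horizon_outer_limit (dC p xs) u].

Definition Assumption1 : Prop :=
  (forall k p, convex_fun (cp_g P k p) /\ convex_fun (cp_h P k p)) /\
  (forall p, epi_cvg (fun k x => (fk k p x)%:E) (fun x => (cp_f P p x)%:E)) /\
  (forall p (x : vec),
     (exists (d c : R) (K : nat), 0 < d /\
        forall k x', (K <= k)%N -> vnorm (x' - x) < d -> c <= fk k p x') /\
     (exists (d c : R) (K : nat), 0 < d /\
        forall k x', (K <= k)%N -> vnorm (x' - x) < d -> fk k p x' <= c)) /\
  (forall p, epi_cvg (fun k x => Phi p (fk k p x)) (Fp p)).

Definition Xk (k : nat) : set vec := [set x | forall p, ~~ is_obj p -> fk k p x <= 0].

Definition Assumption2 (x0 : vec) (ahat : 'I_m -> nat -> R) : Prop :=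
  (forall p k, is_obj p -> ahat p k = 0) /\
  (forall p, ~~ is_obj p ->
     (forall k, 0 <= ahat p k) /\
     (forall k x, Xk k x -> Num.max 0 (fk k.+1 p x - fk k p x) <= ahat p k) /\
     exists S : R, rcvg (fun N => \sum_(0 <= k' < N) ahat p k') S /\ fk 0 p x0 <= - S).

Definition Assumption3 (ell : nat -> R) : Prop :=
  (forall k, 0 < ell k) /\
  forall k (x x' : vec) p,
    hausdorff_le (csubdiff (cp_g P k p) x) (csubdiff (cp_g P k p) x') (ell k * vnorm (x - x')) \/
    hausdorff_le (csubdiff (cp_h P k p) x) (csubdiff (cp_h P k p) x') (ell k * vnorm (x - x')).

Definition Assumption4 : Prop :=
  forall k, level_bounded (fun x => (\sum_(p < m) Phi p (fk k p x))%E).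

Definition Assumption5 : Prop :=
  forall xbar, dom_all xbar ->
  forall (y : 'I_m -> R) (v : 'I_m -> vec),
    (forall p,
       ((exists t, Tset p xbar t /\ ncone (edom (Phi p)) t (y p)) /\
          conv_hull (dA p xbar) (v p)) \/
       (dAinf p xbar (v p) /\ v p <> 0)) ->
    \sum_(p < m) y p *: v p = 0 -> forall p, y p = 0.

Definition fup (sigma : 'I_m -> nat -> R) (k : nat) (p : 'I_m) (a y x : vec) : R :=
  cp_g P k p x - cp_h P k p y - dot a (x - y) + sigma p k.

Definition flo (k : nat) (p : 'I_m) (b y x : vec) : R :=
  cp_g P k p y + dot b (x - y) - cp_h P k p x.

Definition valid_picks (k : nat) (a b : 'I_m -> vec) (y : vec) : Prop :=
  forall p, csubdiff (cp_h P k p) y (a p) /\ csubdiff (cp_g P k p) y (b p).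

Definition sub_obj sigma (lam : R) k (a b : 'I_m -> vec) (y x : vec) : \bar R :=
  ((\sum_(p < m | is_obj p)
      (phi_up (Phi p) (fup sigma k p (a p) y x) + phi_down (Phi p) (flo k p (b p) y x)))
   + (lam / 2 * vnorm (x - y) ^+ 2)%:E)%E.

Definition sub_feas sigma k (a : 'I_m -> vec) (y x : vec) : Prop :=
  forall p, ~~ is_obj p -> fup sigma k p (a p) y x <= 0.

Definition sub_sol sigma lam k (a b : 'I_m -> vec) (y x'' : vec) : Prop :=
  sub_feas sigma k a y x'' /\
  forall x, sub_feas sigma k a y x -> (sub_obj sigma lam k a b y x'' <= sub_obj sigma lam k a b y x)%E.

Definition Assumption6 sigma lam : Prop :=
  forall k (x' x'' : vec) (a b : 'I_m -> vec),
    valid_picks k a b x' -> sub_sol sigma lam k a b x' x'' ->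
    forall y : 'I_m -> R,
      (forall p, ~~ is_obj p -> ncone [set t | t <= 0] (fup sigma k p (a p) x' x'') (y p)) ->
      (exists w : 'I_m -> vec,
         (forall p, ~~ is_obj p -> csubdiff (fun x => fup sigma k p (a p) x' x) x'' (w p)) /\
         \sum_(p < m | ~~ is_obj p) y p *: w p = 0) ->
      forall p, ~~ is_obj p -> y p = 0.

End Problem.

Record adc_run (R : realType) (n : nat) (m : nat) := ADCRun {
  r_lam : R;
  r_eps : nat -> R;
  r_del : nat -> R;
  r_ell : nat -> R;
  r_ahat : 'I_m -> nat -> R;
  r_sigma : 'I_m -> nat -> R;
  r_X : nat -> 'rV[R]_n;
  r_xi : nat -> nat -> 'rV[R]_n;
  r_ik : nat -> nat;
  r_a : nat -> nat -> 'I_m -> 'rV[R]_n;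
  r_b : nat -> nat -> 'I_m -> 'rV[R]_n
}.
Arguments r_lam {R n m} a.
Arguments r_eps {R n m} a.
Arguments r_del {R n m} a.
Arguments r_ell {R n m} a.
Arguments r_ahat {R n m} a.
Arguments r_sigma {R n m} a.
Arguments r_X {R n m} a.
Arguments r_xi {R n m} a.
Arguments r_ik {R n m} a.
Arguments r_a {R n m} a.
Arguments r_b {R n m} a.

Section Method.
Context {R : realType} {n : nat} (P : cp1 R n) (M : adc_run R n (cp_m P)).
Local Notation vec := 'rV[R]_n.
Local Notation m := (cp_m P).

Definition method_params : Prop :=
  0 < r_lam M /\
  (forall k, 0 < r_eps M k /\ r_eps M k.+1 <= r_eps M k) /\ rcvg (r_eps M) 0 /\
  (forall k, 0 < r_del M k /\ r_del M k.+1 <= r_del M k) /\ rcvg (r_del M) 0 /\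
  (forall k, r_del M k.+1 / (r_lam M + r_ell M k.+1) <= r_del M k / (r_lam M + r_ell M k)) /\
  rcvg (fun k => r_del M k / (r_lam M + r_ell M k)) 0.

Definition sigma_def : Prop :=
  forall p k, rcvg (fun N => \sum_(k <= k' < N) r_ahat M p k') (r_sigma M p k).

Definition crit (k i : nat) : Prop :=
  let y := r_xi M k i in let x := r_xi M k i.+1 in
  (forall p, fup P (r_sigma M) k p (r_a M k i p) y x <= fk P k p x + r_sigma M p k + r_eps M k) /\
  (forall p, I2 P p -> fk P k p x - r_eps M k <= flo P k p (r_b M k i p) y x) /\
  vnorm (x - y) <= r_del M k / (r_lam M + r_ell M k).

Definition generated : Prop :=
  (forall k, r_xi M k 0 = r_X M k) /\
  (forall k, r_X M k.+1 = r_xi M k (r_ik M k)) /\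
  (forall k i, (i <= r_ik M k)%N ->
     valid_picks P k (r_a M k i) (r_b M k i) (r_xi M k i) /\
     sub_sol P (r_sigma M) (r_lam M) k (r_a M k i) (r_b M k i) (r_xi M k i) (r_xi M k i.+1)) /\
  (forall k, crit k (r_ik M k)) /\
  (forall k i, (i < r_ik M k)%N -> ~ crit k i).

(* Y^k(x^{k+1}) ; an element is y : 'I_m -> R * R, y p = (y_{p,1}, y_{p,2}) *)
Definition Yset (k : nat) : set ('I_m -> R * R) :=
  let i := r_ik M k in
  let x' := r_xi M k i in let x'' := r_xi M k i.+1 in
  let a := r_a M k i in let b := r_b M k i in
  [set y | (forall p,
        esubdiff (phi_up (Phi P p)) (fup P (r_sigma M) k p (a p) x' x'') (y p).1 /\
        esubdiff (phi_down (Phi P p)) (flo P k p (b p) x' x'') (y p).2) /\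
     exists u w : 'I_m -> vec,
       (forall p, csubdiff (fun x => fup P (r_sigma M) k p (a p) x' x) x'' (u p) /\
                  supdiff (fun x => flo P k p (b p) x' x) x'' (w p)) /\
       \sum_(p < m) ((y p).1 *: u p + (y p).2 *: w p) + r_lam M *: (x'' - x') = 0].

End Method.

Definition ynorm {R : realType} {m : nat} (y : 'I_m -> R * R) : R :=
  Num.sqrt (\sum_(p < m) ((y p).1 ^+ 2 + (y p).2 ^+ 2)).

(* Main.v *)
Require Import Defs.
From HB Require Import structures.
From mathcomp Require Import all_boot all_order all_algebra.
From mathcomp Require Import boolp classical_sets reals constructive_ereal.
From mathcomp Require Import topology normedtype sequences.
From mathcomp Require Import ring lra.
Import Order.TTheory GRing.Theory Num.Theory.
Import numFieldNormedType.Exports.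
Local Open Scope ring_scope.
Local Open Scope classical_set_scope.
Set Implicit Arguments.
Unset Strict Implicit.

Section Lim.
Context {R : realType}.

Lemma rcvgE (u : nat -> R) l : rcvg u l <-> u @ \oo --> l.
Proof.
split.
  move=> h; apply/cvgrPdist_lt => e e0; have [K HK] := h e e0.
  exists K => // k /= kK; rewrite distrC; exact: HK.
move=> /cvgrPdist_lt h e e0; have [K _ HK] := h e e0.
exists K => k kK; rewrite distrC; exact: HK.
Qed.

Lemma rcvg_add u v (a b : R) : rcvg u a -> rcvg v b -> rcvg (fun k => u k + v k) (a + b).
Proof. by move=> /rcvgE hu /rcvgE hv; apply/rcvgE; exact: cvgD. Qed.
Lemma rcvg_mul u v (a b : R) : rcvg u a -> rcvg v b -> rcvg (fun k => u k * v k) (a * b).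
Proof. by move=> /rcvgE hu /rcvgE hv; apply/rcvgE; exact: cvgM. Qed.
Lemma rcvg_opp u (a : R) : rcvg u a -> rcvg (fun k => - u k) (- a).
Proof. by move=> /rcvgE hu; apply/rcvgE; exact: cvgN. Qed.
Lemma rcvg_cst (a : R) : rcvg (fun _ => a) a.
Proof. by move=> e e0; exists 0%N => k _; rewrite subrr normr0. Qed.
Lemma rcvg_unique u (a b : R) : rcvg u a -> rcvg u b -> a = b.
Proof. by move=> /rcvgE ha /rcvgE hb; exact: (cvg_unique _ ha hb). Qed.
Lemma rcvg_le u v (a b : R) : rcvg u a -> rcvg v b -> (exists K, forall k, (K <= k)%N -> u k <= v k) -> a <= b.
Proof.
move=> /rcvgE ha /rcvgE hb [K HK]; apply: (ler_cvg_to ha hb).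
exists K => // k /= kK; exact: HK.
Qed.
End Lim.

Definition strict (phi : nat -> nat) := forall j, (phi j < phi j.+1)%N.

Lemma strict_ge phi : strict phi -> forall j, (j <= phi j)%N.
Proof. by move=> h; elim=> [//|j IH]; exact: leq_ltn_trans IH (h j). Qed.

Lemma strict_mono phi : strict phi -> forall i j, (i <= j)%N -> (phi i <= phi j)%N.
Proof.
move=> h i j /subnK <-; elim: (j - i)%N => [//|d IH].
by rewrite addSn; exact: leq_trans IH (ltnW (h _)).
Qed.

Lemma strict_comp phi psi : strict phi -> strict psi -> strict (phi \o psi).
Proof.
move=> hp hq j /=; have := strict_mono hp (hq j).
by move=> H; exact: leq_trans (hp _) H.
Qed.

Section Lim2.
Context {R : realType}.

Lemma rcvg_sub (u : nat -> R) l phi : strict phi -> rcvg u l -> rcvg (u \o phi) l.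
Proof.
move=> hp h e e0; have [K HK] := h e e0; exists K => k kK; apply: HK.
exact: leq_trans kK (strict_ge hp k).
Qed.

Lemma rcvg_shift (u : nat -> R) l : (exists K, rcvg (fun k => u (k + K)%N) l) -> rcvg u l.
Proof.
move=> [K h] e e0; have [K' HK] := h e e0; exists (K' + K)%N => k kK.
have := HK (k - K)%N; rewrite subnK; last by apply: leq_trans kK; exact: leq_addl.
apply; by rewrite leq_subRL // ?(leq_trans _ kK) ?leq_addl // addnC.
Qed.

Lemma rcvg_ext (u v : nat -> R) l : (forall k, u k = v k) -> rcvg u l -> rcvg v l.
Proof. by move=> h hu e e0; have [K HK] := hu e e0; exists K => k /HK; rewrite h. Qed.

Lemma rcvg_ext_ev (u v : nat -> R) l : (exists K, forall k, (K <= k)%N -> u k = v k) -> rcvg u l -> rcvg v l.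
Proof.
move=> [K1 h] hu e e0; have [K HK] := hu e e0; exists (maxn K K1) => k.
rewrite geq_max => /andP[k1 k2]; rewrite -h //; exact: HK.
Qed.

Lemma rcvg_sum (I : eqType) (r : seq I) (Pr : pred I) (f : nat -> I -> R) (L : I -> R) :
  (forall i, Pr i -> rcvg (fun k => f k i) (L i)) ->
  rcvg (fun k => \sum_(i <- r | Pr i) f k i) (\sum_(i <- r | Pr i) L i).
Proof.
move=> h; elim: r => [|i r IH].
  rewrite big_nil; apply: rcvg_ext (rcvg_cst 0) => k; by rewrite big_nil.
rewrite big_cons; case: ifP => Pi.
  apply: rcvg_ext (rcvg_add (h i Pi) IH) => k; by rewrite big_cons Pi.
by apply: rcvg_ext IH => k; rewrite big_cons Pi.
Qed.

Lemma rcvg_norm (u : nat -> R) l : rcvg u l -> rcvg (fun k => `|u k|) `|l|.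
Proof. by move=> /rcvgE h; apply/rcvgE; exact: cvg_norm. Qed.

Lemma rcvg_squeeze0 (u v : nat -> R) : rcvg v 0 ->
  (exists K, forall k, (K <= k)%N -> `|u k| <= v k) -> rcvg u 0.
Proof.
move=> hv [K1 h] e e0; have [K HK] := hv e e0; exists (maxn K K1) => k.
rewrite geq_max => /andP[k1 k2]; rewrite subr0.
apply: le_lt_trans (h _ k2) _; have := HK _ k1; rewrite subr0.
by move=> H; apply: le_lt_trans H; exact: ler_norm.
Qed.

Lemma rcvg_sub0 (u : nat -> R) l : rcvg u l <-> rcvg (fun k => u k - l) 0.
Proof.
split=> h e e0; have [K HK] := h e e0; exists K => k /HK; by rewrite subr0.
Qed.

Lemma rcvg_le_ev (u : nat -> R) l c : rcvg u l -> (exists K, forall k, (K <= k)%N -> u k <= c) -> l <= c.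
Proof. by move=> h hK; apply: (rcvg_le h (rcvg_cst c)). Qed.
Lemma rcvg_ge_ev (u : nat -> R) l c : rcvg u l -> (exists K, forall k, (K <= k)%N -> c <= u k) -> c <= l.
Proof. by move=> h hK; apply: (rcvg_le (rcvg_cst c) h). Qed.

Lemma rcvg_bounded (u : nat -> R) l : rcvg u l -> exists K, forall k, (K <= k)%N -> `|u k| <= `|l| + 1.
Proof.
move=> h; have [K HK] := h 1 ltr01; exists K => k /HK H.
have : `|u k| <= `|l| + `|u k - l| by rewrite -[u k in leLHS](subrK l) addrC ler_normD.
move=> H2; apply: le_trans H2 _; rewrite lerD2l; exact: ltW.
Qed.

Lemma rcvg_pos_ev (u : nat -> R) l : rcvg u l -> 0 < l -> exists K, forall k, (K <= k)%N -> l / 2 < u k.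
Proof.
move=> h l0; have [K HK] := h (l/2) (divr_gt0 l0 (ltr0Sn _ 1)); exists K => k /HK.
rewrite ltr_norml => /andP[H _]; move: H; rewrite ltrBrDl.
by move=> H; apply: le_lt_trans H; rewrite {2}(splitr l) addrK.
Qed.

End Lim2.

Section BW.
Context {R : realType}.

Lemma BW1 (u : nat -> R) (B : R) :
  (forall j, `|u j| <= B) -> exists phi, strict phi /\ exists l, rcvg (u \o phi) l.
Proof.
move=> hB.
have bnd : bounded_fun u.
  exists B; split; first by rewrite num_real.
  move=> x Bx y _; apply: le_trans (hB y) _. exact: ltW.
have [f fi fc] := bolzano_weierstrass bnd.
exists f; split.
  move=> j; rewrite ltnNge; have := fi j.+1 j; rewrite /Order.le /=.
  by move=> ->; rewrite ltnn.
exists (lim (u \o f @ \oo)); apply/rcvgE; exact: fc.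
Qed.

Lemma BWfin (I : finType) (a : nat -> I -> R) (B : R) :
  (forall j i, `|a j i| <= B) ->
  exists phi, strict phi /\ exists L : I -> R, forall i, rcvg (fun j => a (phi j) i) (L i).
Proof.
move=> hB.
suff : forall r : seq I, exists phi, strict phi /\ exists L : I -> R,
   forall i, i \in r -> rcvg (fun j => a (phi j) i) (L i).
  move=> /(_ (enum I)) [phi [sp [L HL]]]; exists phi; split => //; exists L => i.
  by apply: HL; rewrite mem_enum.
elim=> [|i0 r [phi [sp [L HL]]]].
  by exists id; split => //; exists (fun _ => 0).
have [psi [sq [l0 H0]]] := BW1 (fun j => hB (phi j) i0).
exists (phi \o psi); split; first exact: strict_comp.
exists (fun i => if i == i0 then l0 else L i) => i; rewrite inE.
case: eqP => [-> _|_ /= ir]; first exact: H0.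
exact: (rcvg_sub sq (HL i ir)).
Qed.

End BW.

Section Vec.
Context {R : realType} {n : nat}.
Local Notation vec := 'rV[R]_n.

Lemma dotE (u v : vec) : dot u v = \sum_(i < n) u 0 i * v 0 i.
Proof. by []. Qed.

Lemma dotC (u v : vec) : dot u v = dot v u.
Proof. by rewrite !dotE; apply: eq_bigr => i _; rewrite mulrC. Qed.

Lemma dotDl (u v w : vec) : dot (u + v) w = dot u w + dot v w.
Proof. by rewrite !dotE -big_split; apply: eq_bigr => i _; rewrite !mxE mulrDl. Qed.

Lemma dotZl a (u w : vec) : dot (a *: u) w = a * dot u w.
Proof. by rewrite !dotE mulr_sumr; apply: eq_bigr => i _; rewrite !mxE mulrA. Qed.

Lemma dotNl (u w : vec) : dot (- u) w = - dot u w.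
Proof. by rewrite -scaleN1r dotZl mulN1r. Qed.

Lemma dotBl (u v w : vec) : dot (u - v) w = dot u w - dot v w.
Proof. by rewrite dotDl dotNl. Qed.

Lemma dot0l (w : vec) : dot 0 w = 0.
Proof. by rewrite dotE big1 // => i _; rewrite mxE mul0r. Qed.

Lemma dotDr (u v w : vec) : dot w (u + v) = dot w u + dot w v.
Proof. by rewrite dotC dotDl !(dotC w). Qed.
Lemma dotZr a (u w : vec) : dot w (a *: u) = a * dot w u.
Proof. by rewrite dotC dotZl dotC. Qed.
Lemma dotBr (u v w : vec) : dot w (u - v) = dot w u - dot w v.
Proof. by rewrite dotC dotBl !(dotC w). Qed.
Lemma dotNr (u w : vec) : dot w (- u) = - dot w u.
Proof. by rewrite dotC dotNl dotC. Qed.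

End Vec.

Section Sqrt.
Context {R : realType}.

Lemma sum_sq_ge0 (I : finType) (a : I -> R) : 0 <= \sum_i a i ^+ 2.
Proof. by apply: sumr_ge0 => i _; exact: sqr_ge0. Qed.

Lemma coord_le_sqrt (I : finType) (a : I -> R) i : `|a i| <= Num.sqrt (\sum_j a j ^+ 2).
Proof.
rewrite -sqrtr_sqr ler_sqrt; last exact: sum_sq_ge0.
rewrite (bigD1 i) //= lerDl; apply: sumr_ge0 => j _; exact: sqr_ge0.
Qed.

Lemma sqrt_le_sumabs (I : finType) (a : I -> R) : Num.sqrt (\sum_j a j ^+ 2) <= \sum_j `|a j|.
Proof.
have H : forall r : seq I, \sum_(j <- r) a j ^+ 2 <= (\sum_(j <- r) `|a j|) ^+ 2.
  elim=> [|i r IH]; first by rewrite !big_nil expr0n.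
  rewrite !big_cons sqrrD -real_normK ?num_real //.
  have h0 : 0 <= \sum_(j <- r) `|a j| by apply: sumr_ge0.
  rewrite -addrA lerD2l; apply: le_trans IH _; rewrite lerDr.
  by apply: mulrn_wge0; apply: mulr_ge0.
have h0 : 0 <= \sum_j `|a j| by apply: sumr_ge0.
rewrite -(ger0_norm h0) -sqrtr_sqr ler_sqrt ?sqr_ge0 //; exact: H.
Qed.

End Sqrt.

Section Vnorm.
Context {R : realType} {n : nat}.
Local Notation vec := 'rV[R]_n.

Lemma vnormE (v : vec) : vnorm v = Num.sqrt (\sum_(i < n) (v 0 i) ^+ 2).
Proof. by rewrite /vnorm dotE; congr Num.sqrt; apply: eq_bigr => i _; rewrite expr2. Qed.

Lemma vnorm_ge0 (v : vec) : 0 <= vnorm v.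
Proof. exact: sqrtr_ge0. Qed.

Lemma coord_le_vnorm (v : vec) i : `|v 0 i| <= vnorm v.
Proof. by rewrite vnormE; exact: (coord_le_sqrt (fun j => v 0 j)). Qed.

Lemma vnorm_le_sum (v : vec) : vnorm v <= \sum_i `|v 0 i|.
Proof. by rewrite vnormE; exact: (sqrt_le_sumabs (fun j => v 0 j)). Qed.

Lemma vnormZ a (v : vec) : vnorm (a *: v) = `|a| * vnorm v.
Proof.
rewrite !vnormE -sqrtr_sqr -sqrtrM ?sqr_ge0 //; congr Num.sqrt.
by rewrite mulr_sumr; apply: eq_bigr => i _; rewrite mxE exprMn.
Qed.

Lemma vnormN (v : vec) : vnorm (- v) = vnorm v.
Proof. by rewrite -scaleN1r vnormZ normrN normr1 mul1r. Qed.

Lemma vnormB (u v : vec) : vnorm (u - v) = vnorm (v - u).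
Proof. by rewrite -vnormN opprB. Qed.

Lemma vnorm0 : vnorm (0 : vec) = 0.
Proof. by rewrite vnormE big1 ?sqrtr0 // => i _; rewrite mxE expr0n. Qed.

Lemma vcvgE (xs : nat -> vec) x :
  vcvg xs x <-> forall i, rcvg (fun k => xs k 0 i) (x 0 i).
Proof.
split.
  move=> h i e e0; have [K HK] := h e e0; exists K => k /HK H.
  by apply: le_lt_trans H; have := coord_le_vnorm (xs k - x) i; rewrite !mxE.
move=> h e e0.
have hs : rcvg (fun k => \sum_(i < n) `|xs k 0 i - x 0 i|) 0.
  have := rcvg_sum (index_enum 'I_n) (Pr:=xpredT) (f:=fun k i => `|xs k 0 i - x 0 i|) (L:=fun _ => 0).
  rewrite big1 // => H; apply: H => i _.
  rewrite -(normr0 R); apply: rcvg_norm; by have /rcvg_sub0 := h i.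
have [K HK] := hs e e0; exists K => k /HK; rewrite subr0 => H.
apply: le_lt_trans (le_trans (vnorm_le_sum _) _) (le_lt_trans (ler_norm _) H).
by apply: ler_sum => i _; rewrite !mxE.
Qed.

Lemma vBW (v : nat -> vec) B : (forall j, vnorm (v j) <= B) ->
  exists phi, strict phi /\ exists x, vcvg (v \o phi) x.
Proof.
move=> hB.
have [phi [sp [L HL]]] := BWfin (a:=fun j (i : 'I_n) => v j 0 i) (fun j i => le_trans (coord_le_vnorm _ _) (hB j)).
exists phi; split => //; exists (\row_i L i); apply/vcvgE => i; rewrite mxE; exact: HL.
Qed.

Lemma vcvg_sub (xs : nat -> vec) x phi : strict phi -> vcvg xs x -> vcvg (xs \o phi) x.
Proof.
move=> sp h e e0; have [K HK] := h e e0; exists K => k kK; apply: HK.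
exact: leq_trans kK (strict_ge sp k).
Qed.



End Vnorm.

Lemma strict_lt q : strict q -> forall i j, (i < j)%N -> (q i < q j)%N.
Proof. by move=> sq i j ij; apply: leq_trans (sq i) (strict_mono sq ij). Qed.

Lemma strict_inv q : strict q -> exists inv : nat -> nat,
  (forall j, inv (q j) = j) /\ (forall k k', (k <= k')%N -> (inv k <= inv k')%N) /\
  (forall J k, (q J < k)%N -> (J < inv k)%N).
Proof.
move=> sq.
have ex k : exists j, (k <= q j)%N by exists k; exact: strict_ge.
pose inv k := ex_minn (ex k).
have invP k : (k <= q (inv k))%N /\ forall j, (k <= q j)%N -> (inv k <= j)%N.
  by rewrite /inv; case: ex_minnP.
exists inv; split; [|split].
- move=> j; have [h1 h2] := invP (q j); apply/eqP; rewrite eqn_leq h2 //=.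
  rewrite leqNgt; apply/negP => /(strict_lt sq); rewrite ltnNge h1 //.
- move=> k k' kk'; have [h1 _] := invP k'; have [_ h2] := invP k.
  apply: h2; exact: leq_trans kk' h1.
- move=> J k qk; have [h1 _] := invP k; rewrite ltnNge; apply/negP => h.
  have := leq_trans h1 (strict_mono sq h); rewrite leqNgt qk //.
Qed.

Section Ext.
Context {R : realType} {n : nat}.
Local Notation vec := 'rV[R]_n.

Lemma inv_to_infty q inv : strict q -> (forall J k, (q J < k)%N -> (J < inv k)%N) ->
  forall J, exists K, forall k, (K <= k)%N -> (J <= inv k)%N.
Proof. by move=> sq h J; exists (q J).+1 => k kK; apply: ltnW; exact: h. Qed.

Lemma vext q (a : nat -> vec) x : strict q -> vcvg a x ->
  exists xs, vcvg xs x /\ forall j, xs (q j) = a j.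
Proof.
move=> sq ha; have [inv [h1 [h2 h3]]] := strict_inv sq.
exists (a \o inv); split; last by move=> j /=; rewrite h1.
move=> e e0; have [K HK] := ha e e0; have [K' HK'] := inv_to_infty sq h3 K.
by exists K' => k /HK' /HK.
Qed.

Lemma rext q (a : nat -> R) l : strict q -> rcvg a l ->
  exists xs, rcvg xs l /\ forall j, xs (q j) = a j.
Proof.
move=> sq ha; have [inv [h1 [h2 h3]]] := strict_inv sq.
exists (a \o inv); split; last by move=> j /=; rewrite h1.
move=> e e0; have [K HK] := ha e e0; have [K' HK'] := inv_to_infty sq h3 K.
by exists K' => k /HK' /HK.
Qed.

Lemma lam_ext q (mu : nat -> R) : strict q -> (forall j, 0 < mu j) ->
  (forall j, mu j.+1 <= mu j) -> rcvg mu 0 ->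
  exists lam : nat -> R, (forall k, 0 < lam k) /\ (forall k, lam k.+1 <= lam k) /\
     rcvg lam 0 /\ forall j, lam (q j) = mu j.
Proof.
move=> sq mp md m0; have [inv [h1 [h2 h3]]] := strict_inv sq.
have mmono i j : (i <= j)%N -> mu j <= mu i.
  move=> /subnK <-; elim: (j - i)%N => [//|d IH].
  by rewrite addSn; exact: le_trans (md _) IH.
exists (mu \o inv); split; first by move=> k; exact: mp.
split; first by move=> k /=; apply: mmono; apply: h2.
split; last by move=> j /=; rewrite h1.
move=> e e0; have [K HK] := m0 e e0; have [K' HK'] := inv_to_infty sq h3 K.
by exists K' => k /HK' /HK.
Qed.

Lemma decr_extract (mu : nat -> R) : (forall j, 0 < mu j) -> rcvg mu 0 ->
  exists psi, strict psi /\ forall j, mu (psi j.+1) <= mu (psi j).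
Proof.
move=> mp m0.
have nx : forall j, exists j', (j < j')%N /\ mu j' <= mu j.
  move=> j; have [K HK] := m0 (mu j) (mp j).
  exists (maxn K j.+1); split; first by rewrite leq_max leqnn orbT.
  have := HK (maxn K j.+1); rewrite leq_max leqnn subr0 => /(_ isT) H.
  by apply: ltW; apply: le_lt_trans H; exact: ler_norm.
have [f hf] := choice nx.
exists (fun j => iter j f 0%N); split => j /=; by case: (hf (iter j f 0%N)).
Qed.

End Ext.

Section Scal.
Context {R : realType}.

Lemma convex_bound (phi : R -> R) (A : R) : convex_rfun phi -> 0 < A ->
  forall z, `|z| <= A -> `|phi z| <= 2 * `|phi 0| + `|phi (- A)| + `|phi A|.
Proof.
move=> cv A0.
have up : forall z, `|z| <= A -> phi z <= `|phi (- A)| + `|phi A|.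
  move=> z; rewrite ler_norml => /andP[z1 z2].
  pose t := (A - z) / (2 * A).
  have t0 : 0 <= t by apply: divr_ge0; lra.
  have t1 : t <= 1 by rewrite ler_pdivrMr; lra.
  have -> : z = t * (- A) + (1 - t) * A.
    rewrite /t; field; lra.
  apply: le_trans (cv _ _ _ _) _; first by rewrite t0 t1.
  apply: lerD.
    by apply: le_trans (ler_norm _) _; rewrite normrM ger0_norm // ler_piMl.
  apply: le_trans (ler_norm _) _; rewrite normrM ger0_norm ?subr_ge0 //.
  by rewrite ler_piMl // ?lerBlDr ?lerDl.
move=> z hz; rewrite ler_norml; apply/andP; split; last first.
  apply: le_trans (up z hz) _; rewrite -addrA lerDr; by rewrite mulr_ge0.
have hmz : `|- z| <= A by rewrite normrN.
have h12 : ((0:R) <= 1/2) && (1/2 <= (1:R)).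
  by apply/andP; split; lra.
have := cv z (- z) (1/2) h12.
have -> : 1/2 * z + (1 - 1/2) * - z = 0 by field.
have := up _ hmz; have := ler_norm (phi 0); have := ler_norm (- phi 0).
rewrite normrN; move=> h1 h2 h3 h4.
have e12 : 1 - 1/2 = 1/2 :> R by field.
rewrite e12 in h4.
lra.
Qed.

Lemma esubdiff_bound (psi : R -> \bar R) (A D t y : R) :
  (forall z, `|z| <= A + 1 -> exists r, psi z = r%:E /\ `|r| <= D) ->
  `|t| <= A -> esubdiff psi t y -> `|y| <= 2 * D.
Proof.
move=> hb ht [_ hy].
have ht0 : `|t| <= A + 1 by lra.
have ht1 : `|t + 1| <= A + 1 by apply: le_trans (ler_normD _ _) _; rewrite normr1 lerD2r.
have ht2 : `|t - 1| <= A + 1 by apply: le_trans (ler_normB _ _) _; rewrite normr1 lerD2r.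
have [r0 [e0 b0]] := hb _ ht0; have [r1 [e1 b1]] := hb _ ht1; have [r2 [e2 b2]] := hb _ ht2.
have := hy (t + 1); have := hy (t - 1); rewrite e0 e1 e2 -!EFinD !lee_fin.
have -> : t + 1 - t = 1 by ring.
have -> : t - 1 - t = -1 by ring.
move: b0 b1 b2; rewrite !ler_norml => /andP[? ?] /andP[? ?] /andP[? ?] ? ?.
apply/andP; split; lra.
Qed.

Lemma esubdiff_zero t (y : R) : esubdiff (fun _ => 0%E) t y -> y = 0.
Proof.
move=> [_ hy]; have := hy (t + 1); have := hy (t - 1).
rewrite !add0e !lee_fin.
have -> : t + 1 - t = 1 by ring.
have -> : t - 1 - t = -1 by ring.
move=> ? ?; lra.
Qed.

End Scal.

Section PhiFacts.
Context {R : realType} {n : nat} (P : cp1 R n).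
Local Notation m := (cp_m P).

Lemma Phi_con (p : 'I_m) : ~~ is_obj P p -> forall z, Phi P p z = if z <= 0 then 0%E else +oo%E.
Proof. by move=> hp z; rewrite /Phi (negbTE hp). Qed.

Lemma Phi_obj (p : 'I_m) : is_obj P p -> forall z, Phi P p z = (cp_phi P p z)%:E.
Proof. by move=> hp z; rewrite /Phi hp. Qed.

Lemma I1_con (p : 'I_m) : ~~ is_obj P p -> I1 P p.
Proof.
move=> hp s t st; rewrite !Phi_con //.
case: ifP => hs; case: ifP => ht //; rewrite ?leey //.
by move: hs; rewrite (le_trans st ht).
Qed.

Lemma phi_up_I1 (p : 'I_m) : I1 P p -> forall z, phi_up (Phi P p) z = Phi P p z.
Proof. by move=> h z; rewrite /phi_up; case: pselect. Qed.

Lemma phi_down_I1 (p : 'I_m) : I1 P p -> forall z, phi_down (Phi P p) z = 0%E.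
Proof. by move=> h z; rewrite /phi_down; case: pselect. Qed.

Lemma esubdiff_con (p : 'I_m) t y : ~~ is_obj P p -> esubdiff (Phi P p) t y ->
  t <= 0 /\ forall s, s <= 0 -> y * (s - t) <= 0.
Proof.
move=> hp [hf hy]; move: hf; rewrite Phi_con //; case: ifP => // t0 _; split => // s s0.
by have := hy s; rewrite !Phi_con // t0 s0 add0e lee_fin.
Qed.

Lemma edom_con (p : 'I_m) t : ~~ is_obj P p -> edom (Phi P p) t <-> t <= 0.
Proof.
move=> hp; rewrite /edom /= Phi_con //; split; first by case: ifP => // _; rewrite ltxx.
by move=> ->; rewrite ltey.
Qed.

Lemma edom_obj (p : 'I_m) t : is_obj P p -> edom (Phi P p) t.
Proof. by move=> hp; rewrite /edom /= Phi_obj // ltey. Qed.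

Lemma ncone0 (C : set R) t : C t -> ncone C t 0.
Proof. by move=> ct; split => // s _; rewrite mul0r. Qed.

Lemma obj_bound (p : 'I_m) : is_obj P p -> convex_rfun (cp_phi P p) ->
  forall A : R, 0 < A -> exists C : R, forall t y, `|t| <= A ->
    (esubdiff (phi_up (Phi P p)) t y \/ esubdiff (phi_down (Phi P p)) t y) -> `|y| <= C.
Proof.
move=> hp cv A A0.
set phi := cp_phi P p.
pose G := 2 * `|phi 0| + `|phi (- (A + 1))| + `|phi (A + 1)|.
have hA1 : 0 < A + 1 by lra.
have hG := convex_bound cv hA1.
set zm := minimizer (Phi P p).
pose D := G + `|phi zm|.
have hG0 : 0 <= G by rewrite /G; apply: addr_ge0; [apply: addr_ge0|]; rewrite // mulr_ge0.
exists (2 * D) => t y ht hor; case: hor => hy; apply: (esubdiff_bound _ ht hy) => z hz.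
- rewrite /phi_up; case: (pselect (enondecr (Phi P p))) => H1.
    rewrite Phi_obj //; exists (phi z); split => //.
    by apply: le_trans (hG z hz) _; rewrite lerDl.
  case: (pselect (enonincr (Phi P p))) => H2.
    exists 0; split => //; rewrite normr0; by apply: addr_ge0.
  case: ifP => _; rewrite Phi_obj //.
    by exists (phi zm); split => //; rewrite lerDr.
  by exists (phi z); split => //; apply: le_trans (hG z hz) _; rewrite lerDl.
- rewrite /phi_down; case: (pselect (enondecr (Phi P p))) => H1.
    exists 0; split => //; rewrite normr0; by apply: addr_ge0.
  case: (pselect (enonincr (Phi P p))) => H2.
    rewrite Phi_obj //; exists (phi z); split => //.
    by apply: le_trans (hG z hz) _; rewrite lerDl.
  case: ifP => _; last by exists 0; split => //; rewrite normr0; apply: addr_ge0.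
  rewrite !Phi_obj // -EFinB; exists (phi z - phi zm); split => //.
  by apply: le_trans (ler_normB _ _) _; rewrite lerD2r hG.
Qed.

End PhiFacts.

Definition AllHyps {R : realType} {n : nat} (P : cp1 R n) (M : adc_run R n (cp_m P)) : Prop :=
  (forall p, is_obj P p -> convex_rfun (cp_phi P p)) /\ Assumption1 P /\
  Assumption2 P (r_X M 0) (r_ahat M) /\ Assumption3 P (r_ell M) /\ Assumption5 P /\
  Assumption6 P (r_sigma M) (r_lam M) /\ method_params P M /\ sigma_def P M /\ generated P M.
Arguments AllHyps {R n} P M.

Section Run.
Context {R : realType} {n : nat} (P : cp1 R n) (M : adc_run R n (cp_m P)).
Hypothesis H : AllHyps P M.
Local Notation m := (cp_m P).
Local Notation vec := 'rV[R]_n.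

Definition xp k := r_xi M k (r_ik M k).
Definition xpp k := r_xi M k (r_ik M k).+1.
Definition ak k := r_a M k (r_ik M k).
Definition bk k := r_b M k (r_ik M k).
Definition fupk k p := fup P (r_sigma M) k p (ak k p) (xp k) (xpp k).
Definition flok k p := flo P k p (bk k p) (xp k) (xpp k).
Definition Tk k p := fk P k p (xpp k).
Definition rho k := r_del M k / (r_lam M + r_ell M k).

Lemma H_phi p : is_obj P p -> convex_rfun (cp_phi P p). Proof. by have [h1 [h2 [h3 [h4 [h5 [h6 [h7 [h8 h9]]]]]]]] := H; exact: h1 p. Qed.
Lemma H_A1 : Assumption1 P. Proof. by have [h1 [h2 [h3 [h4 [h5 [h6 [h7 [h8 h9]]]]]]]] := H; exact: h2. Qed.
Lemma H_A2 : Assumption2 P (r_X M 0) (r_ahat M). Proof. by have [h1 [h2 [h3 [h4 [h5 [h6 [h7 [h8 h9]]]]]]]] := H; exact: h3. Qed.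
Lemma H_A3 : Assumption3 P (r_ell M). Proof. by have [h1 [h2 [h3 [h4 [h5 [h6 [h7 [h8 h9]]]]]]]] := H; exact: h4. Qed.
Lemma H_A5 : Assumption5 P. Proof. by have [h1 [h2 [h3 [h4 [h5 [h6 [h7 [h8 h9]]]]]]]] := H; exact: h5. Qed.
Lemma H_A6 : Assumption6 P (r_sigma M) (r_lam M). Proof. by have [h1 [h2 [h3 [h4 [h5 [h6 [h7 [h8 h9]]]]]]]] := H; exact: h6. Qed.
Lemma H_par : method_params P M. Proof. by have [h1 [h2 [h3 [h4 [h5 [h6 [h7 [h8 h9]]]]]]]] := H; exact: h7. Qed.
Lemma H_sig : sigma_def P M. Proof. by have [h1 [h2 [h3 [h4 [h5 [h6 [h7 [h8 h9]]]]]]]] := H; exact: h8. Qed.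
Lemma H_gen : generated P M. Proof. by have [h1 [h2 [h3 [h4 [h5 [h6 [h7 [h8 h9]]]]]]]] := H; exact: h9. Qed.

Lemma lam_gt0 : 0 < r_lam M. Proof. by case: H_par. Qed.
Lemma eps_gt0 k : 0 < r_eps M k. Proof. by case: H_par => _ [/(_ k) []]. Qed.
Lemma eps_cvg : rcvg (r_eps M) 0. Proof. by case: H_par => _ [_ []]. Qed.
Lemma del_gt0 k : 0 < r_del M k. Proof. by case: H_par => _ [_ [_ [/(_ k) []]]]. Qed.
Lemma del_cvg : rcvg (r_del M) 0. Proof. by case: H_par => _ [_ [_ [_ []]]]. Qed.
Lemma rho_cvg : rcvg rho 0. Proof. by case: H_par => _ [_ [_ [_ [_ []]]]]. Qed.
Lemma ell_gt0 k : 0 < r_ell M k. Proof. by case: H_A3 => h _; exact: h. Qed.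
Lemma rho_ge0 k : 0 <= rho k.
Proof. by rewrite /rho divr_ge0 // ltW // ?del_gt0 // addr_gt0 // ?lam_gt0 ?ell_gt0. Qed.
Lemma ell_rho k : r_ell M k * rho k <= r_del M k.
Proof.
rewrite /rho mulrCA ger_pMr ?del_gt0 // ler_pdivrMr ?mul1r ?addr_gt0 ?lam_gt0 ?ell_gt0 //.
by rewrite lerDr ltW // lam_gt0.
Qed.

Lemma X_xp k : r_X M k.+1 = xp k. Proof. by case: H_gen => _ [->]. Qed.
Lemma picks k : valid_picks P k (ak k) (bk k) (xp k).
Proof. by case: H_gen => _ [_ [/(_ k (r_ik M k) (leqnn _)) []]]. Qed.
Lemma sol k : sub_sol P (r_sigma M) (r_lam M) k (ak k) (bk k) (xp k) (xpp k).
Proof. by case: H_gen => _ [_ [/(_ k (r_ik M k) (leqnn _)) []]]. Qed.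
Lemma critk k : crit P M k (r_ik M k). Proof. by case: H_gen => _ [_ [_ []]]. Qed.

Lemma R3 k p : Tk k p + r_sigma M p k <= fupk k p.
Proof.
have [ha _] := picks k p; have := ha (xpp k).
rewrite /Tk /fupk /fup /fk => h; lra.
Qed.

Lemma R4 k p : fupk k p <= Tk k p + r_sigma M p k + r_eps M k.
Proof. by have [h _] := critk k; exact: h. Qed.

Lemma R5 k p : flok k p <= Tk k p.
Proof.
have [_ hb] := picks k p; have := hb (xpp k).
rewrite /Tk /flok /flo /fk => h; lra.
Qed.

Lemma R6 k p : I2 P p -> Tk k p - r_eps M k <= flok k p.
Proof. by have [_ [h _]] := critk k; exact: h. Qed.

Lemma R7 k p : ~~ is_obj P p -> fupk k p <= 0.
Proof. by have [h _] := sol k; exact: h. Qed.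

Lemma R8 k : vnorm (xpp k - xp k) <= rho k.
Proof. by have [_ [_ h]] := critk k. Qed.

End Run.

Section Sig.
Context {R : realType} {n : nat} (P : cp1 R n) (M : adc_run R n (cp_m P)).
Hypothesis H : AllHyps P M.
Local Notation m := (cp_m P).

Lemma sig_obj p k : is_obj P p -> r_sigma M p k = 0.
Proof.
move=> hp; have [h0 _] := H_A2 H.
have := H_sig H p k; move=> hs; apply: (rcvg_unique hs).
apply: rcvg_ext (rcvg_cst 0) => N; rewrite big1 // => i _; exact: h0.
Qed.

Lemma sig_cvg p : rcvg (fun k => r_sigma M p k) 0.
Proof.
case hp: (is_obj P p).
  by apply: rcvg_ext (rcvg_cst 0) => k; rewrite sig_obj.
have [_ h2] := H_A2 H; have [_ [_ [S [hS _]]]] := h2 p (negbT hp).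
pose c k := \sum_(0 <= k' < k) r_ahat M p k'.
have e k : r_sigma M p k = S - c k.
  apply: (rcvg_unique (H_sig H p k)).
  apply: (rcvg_ext_ev (u := fun N => c N - c k)); last first.
    by apply: rcvg_add hS (rcvg_cst _).
  exists k => N kN; rewrite /c (@big_cat_nat _ _ _ k 0 N _ _ (leq0n k) kN) /=; ring.
have := rcvg_add (rcvg_cst S) (rcvg_opp hS); rewrite subrr => h.
by apply: rcvg_ext h => k; rewrite e.
Qed.

End Sig.

Section Help.
Context {R : realType} {n : nat}.
Local Notation vec := 'rV[R]_n.

Lemma dot_delta (v : vec) i : dot v (delta_mx 0 i) = v 0 i.
Proof.
rewrite dotE (bigD1 i) //= big1 ?addr0; first by rewrite mxE !eqxx mulr1.
by move=> j /negbTE ji; rewrite mxE ji andbF mulr0.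
Qed.

Definition cbound (F : vec -> R) (x : vec) i :=
  `|F (x + delta_mx 0 i) - F x| + `|F (x - delta_mx 0 i) - F x|.

Lemma csub_coord (F : vec -> R) x v i : csubdiff F x v -> `|v 0 i| <= cbound F x i.
Proof.
move=> h; have h1 := h (x + delta_mx 0 i); have h2 := h (x - delta_mx 0 i).
have e1 : x + delta_mx 0 i - x = delta_mx 0 i by rewrite addrAC subrr add0r.
have e2 : x - delta_mx 0 i - x = - delta_mx 0 i by rewrite addrAC subrr add0r.
move: h1 h2; rewrite e1 e2 dotNr !dot_delta => h1 h2.
have := ler_norm (F (x + delta_mx 0 i) - F x); have := ler_norm (F (x - delta_mx 0 i) - F x).
have := normr_ge0 (F (x + delta_mx 0 i) - F x); have := normr_ge0 (F (x - delta_mx 0 i) - F x).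
rewrite /cbound ler_norml => *; apply/andP; split; lra.
Qed.

Lemma supdiff_coord (F : vec -> R) x v i : supdiff F x v -> `|v 0 i| <= cbound (fun z => - F z) x i.
Proof. by move=> /(csub_coord i); rewrite mxE normrN. Qed.

Lemma csubdiff_closed (F : vec -> R) (x : vec) (us : nat -> vec) (u : vec) :
  (forall j, csubdiff F x (us j)) -> (forall i, rcvg (fun j => us j 0 i) (u 0 i)) ->
  csubdiff F x u.
Proof.
move=> hu hc z; rewrite -lerBrDl.
apply: (rcvg_le_ev (u := fun j => dot (us j) (z - x))).
  rewrite dotE; apply: rcvg_sum => i _; apply: rcvg_mul (hc i) (rcvg_cst _).
by exists 0%N => j _; rewrite lerBrDl; exact: hu.
Qed.

Lemma supdiff_closed (F : vec -> R) (x : vec) (us : nat -> vec) (u : vec) :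
  (forall j, supdiff F x (us j)) -> (forall i, rcvg (fun j => us j 0 i) (u 0 i)) ->
  supdiff F x u.
Proof.
move=> hu hc; apply: (csubdiff_closed (us := fun j => - us j)) => // i.
rewrite mxE; apply: rcvg_ext (rcvg_opp (hc i)) => j; by rewrite mxE.
Qed.

End Help.

Section Ynorm.
Context {R : realType} {m : nat}.

Lemma ynorm_ge0 (y : 'I_m -> R * R) : 0 <= ynorm y.
Proof. exact: sqrtr_ge0. Qed.

Lemma ynorm_c1 (y : 'I_m -> R * R) p : `|(y p).1| <= ynorm y.
Proof.
rewrite -sqrtr_sqr /ynorm ler_sqrt; last by apply: sumr_ge0 => i _; rewrite addr_ge0 ?sqr_ge0.
rewrite (bigD1 p) //= -addrA lerDl addr_ge0 ?sqr_ge0 //.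
by apply: sumr_ge0 => i _; rewrite addr_ge0 ?sqr_ge0.
Qed.

Lemma ynorm_c2 (y : 'I_m -> R * R) p : `|(y p).2| <= ynorm y.
Proof.
rewrite -sqrtr_sqr /ynorm ler_sqrt; last by apply: sumr_ge0 => i _; rewrite addr_ge0 ?sqr_ge0.
rewrite (bigD1 p) //= [(y p).1 ^+ 2 + _]addrC -addrA lerDl addr_ge0 ?sqr_ge0 //.
by apply: sumr_ge0 => i _; rewrite addr_ge0 ?sqr_ge0.
Qed.

End Ynorm.

Section Ynorm2.
Context {R : realType} {m : nat}.
Lemma ynorm_le (y : 'I_m -> R * R) : ynorm y <= \sum_p (`|(y p).1| + `|(y p).2|).
Proof.
have H : forall r : seq 'I_m, \sum_(j <- r) ((y j).1 ^+ 2 + (y j).2 ^+ 2)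
   <= (\sum_(j <- r) (`|(y j).1| + `|(y j).2|)) ^+ 2.
  elim=> [|i r IH]; first by rewrite !big_nil expr0n.
  rewrite !big_cons sqrrD.
  have h0 : 0 <= \sum_(j <- r) (`|(y j).1| + `|(y j).2|) by apply: sumr_ge0 => *; rewrite addr_ge0.
  have h1 : (y i).1 ^+ 2 + (y i).2 ^+ 2 <= (`|(y i).1| + `|(y i).2|) ^+ 2.
    rewrite sqrrD !real_normK ?num_real // addrAC lerDl.
    by rewrite mulrn_wge0 // mulr_ge0.
  set S := \sum_(j <- r) (`|(y j).1| + `|(y j).2|).
  have h2 : 0 <= (`|(y i).1| + `|(y i).2|) * S *+ 2.
    by apply: mulrn_wge0; apply: mulr_ge0 => //; rewrite addr_ge0.
  move: IH h1 h2; set A := (`|(y i).1| + `|(y i).2|) ^+ 2; set B := (_ * S) *+ 2.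
  move=> IH h1 h2; move: IH; rewrite -/S => IH; lra.
have h0 : 0 <= \sum_p (`|(y p).1| + `|(y p).2|) by apply: sumr_ge0 => *; rewrite addr_ge0.
rewrite -(ger0_norm h0) -sqrtr_sqr /ynorm ler_sqrt ?sqr_ge0 //; exact: H.
Qed.
End Ynorm2.

Lemma harm_cvg {R : realType} : rcvg (fun j : nat => (j.+1%:R : R)^-1) 0.
Proof. apply/rcvgE; exact: cvg_harmonic. Qed.

Lemma tau_null {R : realType} (tau : nat -> R) c :
  (forall j, j.+1%:R <= tau j) -> rcvg (fun j => c / tau j) 0.
Proof.
move=> ht; apply: (rcvg_squeeze0 (v := fun j => `|c| * (j.+1%:R)^-1)).
  by have := rcvg_mul (rcvg_cst `|c|) harm_cvg; rewrite mulr0.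
exists 0%N => j _; have t0 : 0 < tau j by apply: lt_le_trans (ht j); rewrite ltr0n.
rewrite normrM normfV (gtr0_norm t0) ler_wpM2l // lef_pV2 ?posrE ?ltr0n //.
Qed.

Lemma le_sum_term {R : realType} (I : finType) (f : I -> R) i :
  (forall i, 0 <= f i) -> f i <= \sum_i f i.
Proof. by move=> h; rewrite (bigD1 i) //= lerDl sumr_ge0. Qed.

Section YsetFacts.
Context {R : realType} {n : nat} (P : cp1 R n) (M : adc_run R n (cp_m P)).
Hypothesis H : AllHyps P M.
Local Notation m := (cp_m P).
Local Notation vec := 'rV[R]_n.

Definition Fu k (p : 'I_m) := fun x => fup P (r_sigma M) k p (ak M k p) (xp M k) x.
Definition Fw k (p : 'I_m) := fun x => flo P k p (bk M k p) (xp M k) x.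

Lemma Yset_unpack k y : Yset P M k y ->
  (forall p, esubdiff (phi_up (Phi P p)) (fupk M k p) (y p).1 /\
             esubdiff (phi_down (Phi P p)) (flok M k p) (y p).2) /\
  exists u w : 'I_m -> vec,
    (forall p, csubdiff (Fu k p) (xpp M k) (u p) /\ supdiff (Fw k p) (xpp M k) (w p)) /\
    forall i, \sum_p ((y p).1 * u p 0 i + (y p).2 * w p 0 i) + r_lam M * (xpp M k 0 i - xp M k 0 i) = 0.
Proof.
move=> [h1 [u [w [h2 h3]]]]; split => //; exists u, w; split => // i.
have e := congr1 (fun v : vec => v 0 i) h3; rewrite /= [in RHS]mxE in e.
rewrite -[RHS]e mxE summxE; congr (_ + _); first by apply: eq_bigr => p _; rewrite !mxE.
by rewrite !mxE.
Qed.

Lemma y2_I1 t y2 p : I1 P p -> esubdiff (phi_down (Phi P p)) t y2 -> y2 = 0.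
Proof.
move=> hp; have -> : phi_down (Phi P p) = fun _ => 0%E by apply: funext => z; rewrite phi_down_I1.
exact: esubdiff_zero.
Qed.

Lemma y1_con t y1 p : ~~ is_obj P p -> esubdiff (phi_up (Phi P p)) t y1 ->
  t <= 0 /\ forall s, s <= 0 -> y1 * (s - t) <= 0.
Proof.
move=> hp; have -> : phi_up (Phi P p) = Phi P p by apply: funext => z; rewrite phi_up_I1 //; exact: I1_con.
exact: esubdiff_con.
Qed.

Lemma obj_ybound (p : 'I_m) : is_obj P p -> forall A : R, 0 < A -> exists C : R, 0 <= C /\
  forall t y, `|t| <= A ->
    (esubdiff (phi_up (Phi P p)) t y \/ esubdiff (phi_down (Phi P p)) t y) -> `|y| <= C.
Proof.
move=> hp A A0; have [C hC] := obj_bound hp (H_phi H hp) A0.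
exists (Num.max C 0); split; first by rewrite le_max lexx orbT.
move=> t y ht hy; apply: le_trans (hC t y ht hy) _; by rewrite le_max lexx.
Qed.

End YsetFacts.

Lemma bdd_over_tau {R : realType} (x tau : nat -> R) C :
  (forall j, `|x j| <= C) -> (forall j, j.+1%:R <= tau j) -> rcvg (fun j => x j / tau j) 0.
Proof.
move=> hx ht; apply: (rcvg_squeeze0 (v := fun j => `|C / tau j|)).
  by rewrite -(normr0 R); apply: rcvg_norm; exact: tau_null.
exists 0%N => j _; have t0 : 0 < tau j by apply: lt_le_trans (ht j); rewrite ltr0n.
rewrite !normrM ler_wpM2r //; apply: le_trans (hx j) (ler_norm _).
Qed.

Lemma ynorm_div {R : realType} {m : nat} (y : 'I_m -> R * R) :
  0 < ynorm y -> 1 <= \sum_p (`|(y p).1 / ynorm y| + `|(y p).2 / ynorm y|).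
Proof.
move=> t0; have ti : 0 < (ynorm y)^-1 by rewrite invr_gt0.
have h := ynorm_le y; rewrite -(ler_pM2r ti) mulfV ?gt_eqF // mulr_suml in h.
apply: le_trans h _; apply: ler_sum => p _.
by rewrite !normrM (gtr0_norm ti) mulrDl.
Qed.

Section PerK.
Context {R : realType} {n : nat} (P : cp1 R n) (M : adc_run R n (cp_m P)).
Hypothesis H : AllHyps P M.
Local Notation m := (cp_m P).
Local Notation vec := 'rV[R]_n.

Lemma perk k : exists B, forall y, Yset P M k y -> ynorm y <= B.
Proof.
case: (pselect (exists B, forall y, Yset P M k y -> ynorm y <= B)) => // hn; exfalso.
have hy : forall j : nat, exists y, Yset P M k y /\ j.+1%:R < ynorm y.
  move=> j; apply: contrapT => hj; apply: hn; exists j.+1%:R => y hy.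
  rewrite leNgt; apply/negP => hlt; apply: hj; by exists y.
have [ys hys] := choice hy.
have huw : forall j, exists uw : ('I_m -> vec) * ('I_m -> vec),
   (forall p, csubdiff (Fu M k p) (xpp M k) (uw.1 p) /\ supdiff (Fw M k p) (xpp M k) (uw.2 p)) /\
   forall i, \sum_p ((ys j p).1 * uw.1 p 0 i + (ys j p).2 * uw.2 p 0 i) + r_lam M * (xpp M k 0 i - xp M k 0 i) = 0.
  move=> j; have [_ [u [w h]]] := Yset_unpack (hys j).1; by exists (u, w).
have [uws huws] := choice huw.
pose tau j := ynorm (ys j).
have tpos j : 0 < tau j by apply: lt_trans (hys j).2; rewrite ltr0n.
have hC : forall p : 'I_m, exists C : R, 0 <= C /\
    forall j, `|(ys j p).1| <= (if is_obj P p then C else `|(ys j p).1|) /\ `|(ys j p).2| <= C.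
  move=> p; case hp: (is_obj P p); last first.
    exists 0; split => // j; split => //.
    rewrite (y2_I1 (I1_con (negbT hp)) ((Yset_unpack (hys j).1).1 p).2) normr0 //.
  have A0 : 0 < `|fupk M k p| + `|flok M k p| + 1.
    by apply: ltr_wpDl; [apply: addr_ge0|].
  have [C [C0 hC]] := obj_ybound H hp A0.
  exists C; split => // j; have [h1 h2] := (Yset_unpack (hys j).1).1 p; split.
    apply: hC (or_introl h1); rewrite -addrA lerDl; by apply: addr_ge0.
  apply: hC (or_intror h2); rewrite addrAC lerDr; by apply: addr_ge0.
have [Cf hCf] := choice hC.
pose Ub (p : 'I_m) i := cbound (Fu M k p) (xpp M k) i.
pose Wb (p : 'I_m) i := cbound (fun z => - Fw M k p z) (xpp M k) i.
have Ub0 p i : 0 <= Ub p i by rewrite /Ub /cbound addr_ge0.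
have Wb0 p i : 0 <= Wb p i by rewrite /Wb /cbound addr_ge0.
pose U := 1 + \sum_(q : 'I_m * 'I_n) (Ub q.1 q.2 + Wb q.1 q.2).
pose a := fun j (c : ('I_m * bool) + ('I_m * 'I_n * bool)) =>
  match c with
  | inl (p, b) => (if b then (ys j p).1 else (ys j p).2) / tau j
  | inr (p, i, b) => if b then (uws j).1 p 0 i else (uws j).2 p 0 i
  end.
have hU0 : 0 <= \sum_(q : 'I_m * 'I_n) (Ub q.1 q.2 + Wb q.1 q.2).
  by apply: sumr_ge0 => q _; apply: addr_ge0.
have ha : forall j c, `|a j c| <= U.
  move=> j [[p b]|[[p i] b]] /=.
  - apply: (@le_trans _ _ 1); last by rewrite /U lerDl.
    rewrite normrM normfV (gtr0_norm (tpos j)) ler_pdivrMr // mul1r.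
    by case: b; [exact: ynorm_c1 | exact: ynorm_c2].
  - apply: (@le_trans _ _ (Ub p i + Wb p i)); last first.
      rewrite /U; apply: le_trans (@le_sum_term _ _ (fun q : 'I_m * 'I_n => Ub q.1 q.2 + Wb q.1 q.2) (p, i) _) _.
        by move=> q; apply: addr_ge0.
      by rewrite lerDr.
    case: b.
      by apply: le_trans (csub_coord i ((huws j).1 p).1) _; rewrite lerDl.
    by apply: le_trans (supdiff_coord i ((huws j).1 p).2) _; rewrite lerDr.
have [phi [sphi [L hL]]] := BWfin ha.
have tauphi j : j.+1%:R <= tau (phi j).
  apply: ltW; apply: le_lt_trans (hys (phi j)).2; rewrite ler_nat ltnS; exact: strict_ge.
have y2z p : L (inl (p, false)) = 0.
  apply: (rcvg_unique (hL (inl (p, false)))).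
  apply: (rcvg_ext _ (bdd_over_tau (x := fun j => (ys (phi j) p).2) (C := Cf p) _ tauphi)) => //.
  by move=> j; exact: ((hCf p).2 (phi j)).2.
have y1z p : is_obj P p -> L (inl (p, true)) = 0.
  move=> hp; apply: (rcvg_unique (hL (inl (p, true)))).
  apply: (rcvg_ext _ (bdd_over_tau (x := fun j => (ys (phi j) p).1) (C := Cf p) _ tauphi)) => //.
  by move=> j; have := ((hCf p).2 (phi j)).1; rewrite hp.
have hnc p : ~~ is_obj P p -> ncone [set t | t <= 0] (fupk M k p) (L (inl (p, true))).
  move=> hp; split; first exact: (R7 H k hp).
  move=> s s0; apply: (rcvg_le_ev (u := fun j => a (phi j) (inl (p, true)) * (s - fupk M k p))).
    exact: rcvg_mul (hL _) (rcvg_cst _).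
  exists 0%N => j _ /=; have [_ h] := y1_con hp ((Yset_unpack (hys (phi j)).1).1 p).1.
  rewrite mulrAC; apply: mulr_le0_ge0 (h s s0) _; rewrite invr_ge0 ltW //.
pose uh p := \row_i L (inr (p, i, true)).
have hcs p : csubdiff (Fu M k p) (xpp M k) (uh p).
  apply: (csubdiff_closed (us := fun j => (uws (phi j)).1 p)) => [j | i].
    exact: ((huws (phi j)).1 p).1.
  rewrite mxE; exact: hL (inr (p, i, true)).
have hsum i : \sum_p (L (inl (p, true)) * L (inr (p, i, true)) + L (inl (p, false)) * L (inr (p, i, false))) = 0.
  have e j : \sum_p (a (phi j) (inl (p, true)) * a (phi j) (inr (p, i, true)) +
       a (phi j) (inl (p, false)) * a (phi j) (inr (p, i, false))) +
       r_lam M * (xpp M k 0 i - xp M k 0 i) / tau (phi j) = 0.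
    transitivity ((\sum_p ((ys (phi j) p).1 * (uws (phi j)).1 p 0 i + (ys (phi j) p).2 * (uws (phi j)).2 p 0 i)
         + r_lam M * (xpp M k 0 i - xp M k 0 i)) / tau (phi j)); last first.
      by rewrite ((huws (phi j)).2 i) mul0r.
    rewrite mulrDl mulr_suml; congr (_ + _); apply: eq_bigr => p _; rewrite /= mulrDl; congr (_ + _); by rewrite mulrAC.
  have h0 := rcvg_ext (fun j => esym (e j)) (rcvg_cst 0).
  have h1 := rcvg_add (rcvg_sum (index_enum 'I_m) (Pr := xpredT)
     (f := fun j p => a (phi j) (inl (p, true)) * a (phi j) (inr (p, i, true)) +
       a (phi j) (inl (p, false)) * a (phi j) (inr (p, i, false)))
     (fun p _ => rcvg_add (rcvg_mul (hL _) (hL _)) (rcvg_mul (hL _) (hL _))))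
     (tau_null (r_lam M * (xpp M k 0 i - xp M k 0 i)) tauphi).
  by have := rcvg_unique h1 h0; rewrite addr0.
have hA6 := H_A6 H (picks H k) (sol H k) (y := fun p => L (inl (p, true))) hnc.
have ycz : forall p, ~~ is_obj P p -> L (inl (p, true)) = 0.
  apply: hA6; exists uh; split; first by move=> p _; exact: hcs p.
  apply/rowP => i; rewrite summxE [RHS]mxE.
  transitivity (\sum_p (L (inl (p, true)) * L (inr (p, i, true)) + L (inl (p, false)) * L (inr (p, i, false)))); last exact: hsum i.
  rewrite [RHS](bigID (fun p => is_obj P p)) /= [X in _ = X + _]big1 ?add0r; last by move=> p hp; rewrite y1z // y2z !mul0r addr0.
  by apply: eq_bigr => p hp; rewrite !mxE y2z mul0r addr0.
have hlim := rcvg_sum (index_enum 'I_m) (Pr := xpredT)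
   (f := fun j p => `|a (phi j) (inl (p, true))| + `|a (phi j) (inl (p, false))|)
   (fun p _ => rcvg_add (rcvg_norm (hL _)) (rcvg_norm (hL _))).
have one : 1 <= \sum_p (`|L (inl (p, true))| + `|L (inl (p, false))|).
  apply: (rcvg_ge_ev hlim); exists 0%N => j _ /=; exact: (ynorm_div (tpos (phi j))).
move: one; rewrite big1 ?ler10 // => p _.
rewrite y2z normr0 addr0; case hp: (is_obj P p); first by rewrite y1z // normr0.
by rewrite ycz ?hp // normr0.
Qed.

End PerK.

Lemma ev_bdd {R : realType} (x : nat -> R) : (exists J B, forall j, (J <= j)%N -> `|x j| <= B) ->
  exists B', forall j, `|x j| <= B'.
Proof.
move=> [J [B hB]]; exists (Num.max B 0 + \sum_(i < J) `|x i|) => j.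
case: (leqP J j) => hj.
  apply: le_trans (hB j hj) _; apply: (@le_trans _ _ (Num.max B 0)); first by rewrite le_max lexx.
  rewrite lerDl; exact: sumr_ge0.
apply: le_trans (_ : \sum_(i < J) `|x i| <= _); last by rewrite lerDr le_max lexx orbT.
exact: (@le_sum_term _ _ (fun i : 'I_J => `|x i|) (Ordinal hj) (fun i => normr_ge0 _)).
Qed.

Lemma rcvg_inv {R : realType} (u : nat -> R) l : rcvg u l -> l != 0 -> rcvg (fun j => (u j)^-1) l^-1.
Proof. by move=> /rcvgE h l0; apply/rcvgE; exact: cvgV. Qed.

Section Approx.
Context {R : realType} {n : nat} (P : cp1 R n) (M : adc_run R n (cp_m P)).
Hypothesis H : AllHyps P M.
Local Notation m := (cp_m P).
Local Notation vec := 'rV[R]_n.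

Lemma Fu_sub k p u : csubdiff (Fu M k p) (xpp M k) u -> csubdiff (cp_g P k p) (xpp M k) (u + ak M k p).
Proof.
move=> hu z; have := hu z; rewrite /Fu /fup dotDl !dotBr; lra.
Qed.

Lemma Fw_sup k p w : supdiff (Fw M k p) (xpp M k) w -> csubdiff (cp_h P k p) (xpp M k) (bk M k p - w).
Proof.
move=> hw z; have := hw z; rewrite /Fw /flo dotBl dotNl !dotBr; lra.
Qed.

Definition dCat k (p : 'I_m) (x : vec) : set vec :=
  msub (csubdiff (cp_g P k p) x) (csubdiff (cp_h P k p) x).

Lemma approx k p u w : csubdiff (Fu M k p) (xpp M k) u -> supdiff (Fw M k p) (xpp M k) w ->
  exists pu ut pw wt,
   (pu = xp M k \/ pu = xpp M k) /\ dCat k p pu ut /\ vnorm (u - ut) <= 2 * r_del M k /\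
   (pw = xp M k \/ pw = xpp M k) /\ dCat k p pw wt /\ vnorm (w - wt) <= 2 * r_del M k.
Proof.
move=> hu hw; have hg := Fu_sub hu; have hh := Fw_sup hw.
have [ha hb] := picks H k p.
have er : r_ell M k * vnorm (xpp M k - xp M k) + r_del M k <= 2 * r_del M k.
  have := ell_rho H k; have := R8 H k; have := ell_gt0 H k => l0 h1 h2.
  have : r_ell M k * vnorm (xpp M k - xp M k) <= r_ell M k * rho M k by rewrite ler_pM2l.
  lra.
have d0 := del_gt0 H k.
have [_ hA3] := H_A3 H; case: (hA3 k (xpp M k) (xp M k) p) => [[hg1 hg2]|[hh1 hh2]].
- have [g2 [g2s g2n]] := hg1 _ hg _ d0.
  have [g3 [g3s g3n]] := hg2 _ hb _ d0.
  exists (xp M k), (g2 - ak M k p), (xpp M k), (g3 - (bk M k p - w)).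
  split; first by left.
  split; first by exists g2, (ak M k p).
  have -> : u - (g2 - ak M k p) = u + ak M k p - g2 by apply/rowP => i; rewrite !mxE; ring.
  split; first by apply: le_trans er; apply: ltW.
  split; first by right.
  split; first by exists g3, (bk M k p - w).
  have -> : w - (g3 - (bk M k p - w)) = bk M k p - g3 by apply/rowP => i; rewrite !mxE; ring.
  by apply: le_trans er; apply: ltW.
- have [a2 [a2s a2n]] := hh2 _ ha _ d0.
  have [h3 [h3s h3n]] := hh1 _ hh _ d0.
  exists (xpp M k), (u + ak M k p - a2), (xp M k), (bk M k p - h3).
  split; first by right.
  split; first by exists (u + ak M k p), a2.
  have -> : u - (u + ak M k p - a2) = - (ak M k p - a2) by apply/rowP => i; rewrite !mxE; ring.
  split; first by rewrite vnormN; apply: le_trans er; apply: ltW.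
  split; first by left.
  split; first by exists (bk M k p), h3.
  have -> : w - (bk M k p - h3) = - ((bk M k p - w) - h3) by apply/rowP => i; rewrite !mxE; ring.
  by rewrite vnormN; apply: le_trans er; apply: ltW.
Qed.

End Approx.

Section Memb.
Context {R : realType} {n : nat} (P : cp1 R n) (M : adc_run R n (cp_m P)).
Hypothesis H : AllHyps P M.
Local Notation m := (cp_m P).
Local Notation vec := 'rV[R]_n.

Lemma coord_null (e et : nat -> vec) i : rcvg (fun j => vnorm (e j - et j)) 0 ->
  rcvg (fun j => e j 0 i - et j 0 i) 0.
Proof.
move=> h; apply: (rcvg_squeeze0 (v := fun j => vnorm (e j - et j))) => //.
by exists 0%N => j _; have := coord_le_vnorm (e j - et j) i; rewrite !mxE.
Qed.

Lemma memb_dA (p : 'I_m) (q : nat -> nat) (pts et e : nat -> vec) xbar (v : vec) :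
  strict q -> vcvg pts xbar -> (forall j, dCat (q j) p (pts j) (et j)) ->
  rcvg (fun j => vnorm (e j - et j)) 0 -> (forall i, rcvg (fun j => e j 0 i) (v 0 i)) ->
  dA P p xbar v.
Proof.
move=> sq hp het hn he; have [xs [hxs hq]] := vext sq hp.
exists xs; split => //; exists q; split => //; exists et; split.
  by move=> j; rewrite /dC hq; exact: het.
apply/vcvgE => i; have := rcvg_add (he i) (rcvg_opp (coord_null i hn)).
rewrite oppr0 addr0; apply: rcvg_ext => j; ring.
Qed.

Lemma memb_dAinf (p : 'I_m) (q : nat -> nat) (pts et e : nat -> vec) xbar (mu : nat -> R) (d : vec) :
  strict q -> vcvg pts xbar -> (forall j, dCat (q j) p (pts j) (et j)) ->
  rcvg (fun j => vnorm (e j - et j)) 0 -> (forall j, 0 < mu j /\ mu j <= 1) -> rcvg mu 0 ->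
  (forall i, rcvg (fun j => mu j * e j 0 i) (d 0 i)) -> dAinf P p xbar d.
Proof.
move=> sq hp het hn hmu m0 he; have [xs [hxs hq]] := vext sq hp.
have [psi [spsi hpsi]] := decr_extract (fun j => (hmu j).1) m0.
have sq' := strict_comp sq spsi.
have [lam [lp [ld [l0 lq]]]] := lam_ext sq' (fun j => (hmu (psi j)).1) hpsi (rcvg_sub spsi m0).
exists xs; split => //; right; exists (q \o psi); split => //.
exists lam; split => //; split => //; split => //.
exists (et \o psi); split.
  by move=> j; rewrite /dC /= hq; exact: het.
apply/vcvgE => i.
have h2 : rcvg (fun j => mu (psi j) * (e (psi j) 0 i - et (psi j) 0 i)) 0.
  apply: (rcvg_squeeze0 (v := fun j => `|e (psi j) 0 i - et (psi j) 0 i|)).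
    rewrite -(normr0 R); apply: rcvg_norm; exact: (rcvg_sub spsi (coord_null i hn)).
  exists 0%N => j _; rewrite normrM; have [m1 m2] := hmu (psi j).
  rewrite (gtr0_norm m1); apply: ler_piMl => //.
have := rcvg_add (rcvg_sub spsi (he i)) (rcvg_opp h2).
rewrite oppr0 addr0; apply: rcvg_ext => j; rewrite /= lq !mxE; ring.
Qed.

End Memb.

Section Feas.
Context {R : realType} {n : nat} (P : cp1 R n) (M : adc_run R n (cp_m P)).
Hypothesis H : AllHyps P M.
Local Notation m := (cp_m P).
Local Notation vec := 'rV[R]_n.

Lemma feas (s : nat -> nat) xbar : strict s -> vcvg (fun j => xpp M (s j)) xbar -> dom_all P xbar.
Proof.
move=> ss hx p; rewrite /Fp; case hp: (is_obj P p); first by rewrite Phi_obj // ltey.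
rewrite Phi_con ?hp //; case: ifP => [_|hf]; first by rewrite ltey.
exfalso; have f0 : 0 < cp_f P p xbar by rewrite ltNge hf.
have [_ [hepi _]] := H_A1 H.
have [xs [hxs hxsq]] := vext ss hx.
have [h1 _] := hepi p xbar.
have f2 : cp_f P p xbar / 2 < cp_f P p xbar by lra.
have [K HK] := h1 xs hxs (cp_f P p xbar / 2) (f2 : ((_ / 2)%:E < (cp_f P p xbar)%:E)%E).
have f20 : 0 < cp_f P p xbar / 2 by lra.
have [K2 HK2] := sig_cvg H p f20.
pose j := maxn K K2.
have hj1 : (K <= s j)%N by apply: leq_trans (strict_ge ss j); rewrite leq_max leqnn.
have hj2 : (K2 <= s j)%N by apply: leq_trans (strict_ge ss j); rewrite leq_max leqnn orbT.
have := HK _ hj1; rewrite hxsq lte_fin => h3.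
have := HK2 _ hj2; rewrite subr0 ltr_norml => /andP[h4 _].
have := R3 H (s j) p; have := R7 H (s j) (negbT hp).
rewrite /Tk => h5 h6; lra.
Qed.

Lemma Tbdd (s : nat -> nat) xbar : strict s -> vcvg (fun j => xpp M (s j)) xbar ->
  forall p, exists B, forall j, `|Tk M (s j) p| <= B.
Proof.
move=> ss hx p; have [_ [_ [hb _]]] := H_A1 H.
have [[d1 [c1 [K1 [d10 h1]]]] [d2 [c2 [K2 [d20 h2]]]]] := hb p xbar.
have dm : 0 < Num.min d1 d2 by rewrite lt_min d10 d20.
have [K3 HK3] := hx _ dm.
apply: ev_bdd; exists (maxn (maxn K1 K2) K3), (`|c1| + `|c2|) => j.
rewrite !geq_max => /andP[/andP[j1 j2] j3].
have hs1 : (K1 <= s j)%N by apply: leq_trans (strict_ge ss j).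
have hs2 : (K2 <= s j)%N by apply: leq_trans (strict_ge ss j).
have := HK3 _ j3; rewrite lt_min => /andP[n1 n2].
have := h1 _ _ hs1 n1; have := h2 _ _ hs2 n2; rewrite /Tk => a1 a2.
have := ler_norm c1; have := ler_norm c2; have := ler_norm (- c1); have := ler_norm (- c2).
rewrite !normrN ler_norml => *; apply/andP; split; lra.
Qed.

Lemma seq_bdd (u : nat -> R) l : rcvg u l -> exists B, forall j, `|u j| <= B.
Proof.
move=> h; apply: ev_bdd; have [K HK] := rcvg_bounded h; by exists K, (`|l| + 1).
Qed.

Lemma fup_bdd (s : nat -> nat) xbar : strict s -> vcvg (fun j => xpp M (s j)) xbar ->
  forall p, exists B, forall j, `|fupk M (s j) p| <= B /\ (I2 P p -> `|flok M (s j) p| <= B).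
Proof.
move=> ss hx p; have [B1 h1] := Tbdd ss hx p.
have [B2 h2] := seq_bdd (sig_cvg H p); have [B3 h3] := seq_bdd (eps_cvg H).
exists (B1 + B2 + B3) => j; split.
  have := R3 H (s j) p; have := R4 H (s j) p.
  have := h1 j; have := h2 (s j); have := h3 (s j); rewrite !ler_norml.
  move=> /andP[? ?] /andP[? ?] /andP[? ?] ? ?; apply/andP; split; lra.
move=> hI2; have := R5 H (s j) p; have := R6 H (s j) hI2.
have := h1 j; have := h2 (s j); have := h3 (s j); rewrite !ler_norml.
move=> /andP[? ?] /andP[? ?] /andP[? ?] ? ?; apply/andP; split; lra.
Qed.

End Feas.

Lemma vcvg_either {R : realType} {n : nat} (a b c : nat -> 'rV[R]_n) x :
  vcvg a x -> vcvg b x -> (forall j, c j = a j \/ c j = b j) -> vcvg c x.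
Proof.
move=> ha hb hc e e0; have [K1 h1] := ha e e0; have [K2 h2] := hb e e0.
exists (maxn K1 K2) => k; rewrite geq_max => /andP[k1 k2].
by case: (hc k) => ->; [exact: h1 | exact: h2].
Qed.

Section Dich.
Context {R : realType} {n : nat} (P : cp1 R n) (M : adc_run R n (cp_m P)).
Local Notation m := (cp_m P).
Local Notation vec := 'rV[R]_n.

Lemma dich (p : 'I_m) q (pts et e : nat -> vec) xbar (mu : nat -> R) muh (dh : vec) :
  strict q -> vcvg pts xbar -> (forall j, dCat (q j) p (pts j) (et j)) ->
  rcvg (fun j => vnorm (e j - et j)) 0 ->
  (forall j, mu j = (1 + vnorm (e j))^-1) -> rcvg mu muh ->
  (forall i, rcvg (fun j => mu j * e j 0 i) (dh 0 i)) ->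
  (muh = 0 /\ dAinf P p xbar dh /\ dh <> 0) \/
  (exists v, dA P p xbar v /\ forall i, rcvg (fun j => e j 0 i) (v 0 i)).
Proof.
move=> sq hp het hn hmu cmu hd.
have mpos j : 0 < mu j /\ mu j <= 1.
  have h1 : 1 <= 1 + vnorm (e j) by rewrite lerDl vnorm_ge0.
  have h0 : 0 < 1 + vnorm (e j) by apply: lt_le_trans h1.
  by rewrite hmu invr_gt0 h0 invf_le1.
case: (eqVneq muh 0) => hm.
- left; split => //; rewrite hm in cmu.
  split; first exact: memb_dAinf sq hp het hn mpos cmu hd.
  move=> d0.
  have h1 : rcvg (fun j => vnorm (\row_i (mu j * e j 0 i))) 1.
    have e1 j : vnorm (\row_i (mu j * e j 0 i)) = 1 - mu j.
      have -> : \row_i (mu j * e j 0 i) = mu j *: e j by apply/rowP => i; rewrite !mxE.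
      rewrite vnormZ ger0_norm ?ltW ?(mpos j).1 // hmu.
      have h0 : 1 + vnorm (e j) != 0 by rewrite gt_eqF // ltr_wpDr // vnorm_ge0.
      by field.
    have := rcvg_add (rcvg_cst 1) (rcvg_opp cmu); rewrite oppr0 addr0.
    by apply: rcvg_ext => j; rewrite e1.
  have h2 : rcvg (fun j => \sum_i `|mu j * e j 0 i|) 0.
    have hc : forall i, xpredT i -> rcvg (fun j => `|mu j * e j 0 i|) ((fun _ => 0) i).
      move=> i _; rewrite -(normr0 R); apply: rcvg_norm.
      by have := hd i; rewrite d0 mxE.
    by have := rcvg_sum (index_enum 'I_n) hc; rewrite big1.
  have h3 : (1:R) <= 0.
    apply: (rcvg_le h1 h2); exists 0%N => j _.
    by apply: le_trans (vnorm_le_sum _) _; apply: ler_sum => i _; rewrite mxE.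
  by rewrite ler10 in h3.
- right; have mh0 : 0 < muh.
    rewrite lt_def hm /=; apply: (rcvg_ge_ev cmu); exists 0%N => j _; exact: ltW (mpos j).1.
  exists (\row_i (dh 0 i / muh)); split; last first.
    move=> i; rewrite mxE; have := rcvg_mul (hd i) (rcvg_inv cmu hm).
    apply: rcvg_ext => j; rewrite mulrAC mulfV ?mul1r // gt_eqF //; exact: (mpos j).1.
  apply: memb_dA sq hp het hn _ => i; rewrite mxE; have := rcvg_mul (hd i) (rcvg_inv cmu hm).
  apply: rcvg_ext => j; rewrite mulrAC mulfV ?mul1r // gt_eqF //; exact: (mpos j).1.
Qed.

End Dich.

Section Core.
Context {R : realType} {n : nat} (P : cp1 R n) (M : adc_run R n (cp_m P)).
Hypothesis H : AllHyps P M.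
Local Notation m := (cp_m P).
Local Notation vec := 'rV[R]_n.

Lemma core (s : nat -> nat) xbar (ys : nat -> 'I_m -> R * R) :
  strict s -> vcvg (fun j => xp M (s j)) xbar ->
  (dom_all P xbar -> forall p, I2 P p -> dAinf P p xbar = [set 0]) ->
  (forall j, Yset P M (s j) (ys j)) -> (forall j, j.+1%:R < ynorm (ys j)) -> False.
Proof.
move=> ss hx' hdA hY hyn.
have hx'' : vcvg (fun j => xpp M (s j)) xbar.
  apply/vcvgE => i; have h := (vcvgE _ _).1 hx' i.
  have hn : rcvg (fun j => xpp M (s j) 0 i - xp M (s j) 0 i) 0.
    apply: (rcvg_squeeze0 (v := fun j => rho M (s j))); first exact: rcvg_sub ss (rho_cvg H).
    exists 0%N => j _; apply: le_trans (R8 H (s j)).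
    by have := coord_le_vnorm (xpp M (s j) - xp M (s j)) i; rewrite !mxE.
  have := rcvg_add h hn; rewrite addr0; apply: rcvg_ext => j; ring.
have hdom := feas H ss hx''.
have hdA' := hdA hdom.
have huw : forall j, exists uw : ('I_m -> vec) * ('I_m -> vec),
   (forall p, csubdiff (Fu M (s j) p) (xpp M (s j)) (uw.1 p) /\ supdiff (Fw M (s j) p) (xpp M (s j)) (uw.2 p)) /\
   forall i, \sum_p ((ys j p).1 * uw.1 p 0 i + (ys j p).2 * uw.2 p 0 i) + r_lam M * (xpp M (s j) 0 i - xp M (s j) 0 i) = 0.
  move=> j; have [_ [u [w h]]] := Yset_unpack (hY j); by exists (u, w).
have [uws huws] := choice huw.
pose u j p := (uws j).1 p.
pose w j p := (uws j).2 p.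
have hy j p := (Yset_unpack (hY j)).1 p.
have hap : forall j, exists f : 'I_m -> vec * vec * vec * vec, forall p,
   ((f p).1.1.1 = xp M (s j) \/ (f p).1.1.1 = xpp M (s j)) /\ dCat (s j) p (f p).1.1.1 (f p).1.1.2 /\
   vnorm (u j p - (f p).1.1.2) <= 2 * r_del M (s j) /\
   ((f p).1.2 = xp M (s j) \/ (f p).1.2 = xpp M (s j)) /\ dCat (s j) p (f p).1.2 (f p).2 /\
   vnorm (w j p - (f p).2) <= 2 * r_del M (s j).
  move=> j.
  have : forall p, exists z : vec * vec * vec * vec,
     (z.1.1.1 = xp M (s j) \/ z.1.1.1 = xpp M (s j)) /\ dCat (s j) p z.1.1.1 z.1.1.2 /\
     vnorm (u j p - z.1.1.2) <= 2 * r_del M (s j) /\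
     (z.1.2 = xp M (s j) \/ z.1.2 = xpp M (s j)) /\ dCat (s j) p z.1.2 z.2 /\
     vnorm (w j p - z.2) <= 2 * r_del M (s j).
    move=> p; have [pu [ut [pw [wt h]]]] := approx H ((huws j).1 p).1 ((huws j).1 p).2.
    by exists (pu, ut, pw, wt).
  by move=> /choice [f hf]; exists f.
have [apx hapx] := choice hap.
have hBT : forall p, exists B, 0 <= B /\ forall j, `|Tk M (s j) p| <= B.
  move=> p; have [B hB] := Tbdd H ss hx'' p; exists B; split => //.
  exact: le_trans (normr_ge0 _) (hB 0%N).
have [BT hBT'] := choice hBT.
have hC : forall p : 'I_m, exists C : R, 0 <= C /\
    forall j, (is_obj P p -> `|(ys j p).1| <= C) /\ `|(ys j p).2| <= C.
  move=> p; case hp: (is_obj P p); last first.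
    exists 0; split => // j; split => //.
    by rewrite (y2_I1 (I1_con (negbT hp)) (hy j p).2) normr0.
  have [BF hBF] := fup_bdd H ss hx'' p.
  have BF0 : 0 <= BF by apply: le_trans (normr_ge0 _) (hBF 0%N).1.
  have A0 : 0 < BF + 1 by lra.
  have [C [C0 hC]] := obj_ybound H hp A0.
  exists C; split => // j; split.
    move=> _; apply: hC (or_introl (hy j p).1); have := (hBF j).1; lra.
  case: (pselect (I1 P p)) => hI.
    by rewrite (y2_I1 hI (hy j p).2) normr0.
  apply: hC (or_intror (hy j p).2); have := (hBF j).2 hI; lra.
have [Cf hCf] := choice hC.
pose z j p := (ys j p).1 *: u j p + (ys j p).2 *: w j p.
pose tau j := ynorm (ys j) + \sum_p vnorm (z j p).
have tge j : ynorm (ys j) <= tau j by rewrite /tau lerDl; apply: sumr_ge0 => p _; exact: vnorm_ge0.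
have tpos j : 0 < tau j by apply: lt_le_trans (tge j); apply: lt_trans (hyn j); rewrite ltr0n.
have zle j p : vnorm (z j p) <= tau j.
  apply: (@le_trans _ _ (\sum_p vnorm (z j p))); last by rewrite /tau lerDr ynorm_ge0.
  exact: (@le_sum_term _ _ (fun p => vnorm (z j p)) p (fun _ => vnorm_ge0 _)).
pose muu j p := (1 + vnorm (u j p))^-1.
pose muw j p := (1 + vnorm (w j p))^-1.
pose I1b p := asbool (I1 P p).
pose a := fun j (c : ('I_m * 'I_6) + ('I_m * 'I_n * 'I_3)) =>
  match c with
  | inl (p, o) => match nat_of_ord o with
      | 0 => (ys j p).1 / tau j
      | 1 => (ys j p).2 / tau j
      | 2 => muu j p
      | 3 => muw j p
      | 4 => if I1b p then (ys j p).1 * (1 + vnorm (u j p)) / tau j else 0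
      | _ => Tk M (s j) p end
  | inr (p, i, o) => match nat_of_ord o with
      | 0 => z j p 0 i / tau j
      | 1 => muu j p * u j p 0 i
      | _ => muw j p * w j p 0 i end
  end.
have hmu1 (v : vec) : 0 < (1 + vnorm v)^-1 /\ (1 + vnorm v)^-1 <= 1.
  have h1 : 1 <= 1 + vnorm v by rewrite lerDl vnorm_ge0.
  have h0 : 0 < 1 + vnorm v by apply: lt_le_trans h1.
  by rewrite invr_gt0 h0 invf_le1.
have hmuv (v : vec) i : `|(1 + vnorm v)^-1 * v 0 i| <= 1.
  rewrite normrM (ger0_norm (ltW (hmu1 v).1)).
  have h0 : 0 < 1 + vnorm v by rewrite ltr_wpDr // vnorm_ge0.
  rewrite mulrC ler_pdivrMr // mul1r; apply: le_trans (coord_le_vnorm v i) _; by rewrite lerDr.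
have hT0 : 0 <= \sum_p BT p by apply: sumr_ge0 => p _; exact: (hBT' p).1.
pose U := 2 + \sum_p BT p.
have U1 : 1 <= U by rewrite /U; lra.
have U2 : 2 <= U by rewrite /U; lra.
have hdiv (x : R) j : `|x| <= tau j -> `|x / tau j| <= 1.
  by move=> hx; rewrite normrM normfV (gtr0_norm (tpos j)) ler_pdivrMr // mul1r.
have ha : forall j c, `|a j c| <= U.
  move=> j [[p [[|[|[|[|[|o]]]]] ho]]|[[p i] [[|[|o]] ho]]] /=.
  - apply: (le_trans _ U1); apply: hdiv; exact: le_trans (ynorm_c1 _ p) (tge j).
  - apply: (le_trans _ U1); apply: hdiv; exact: le_trans (ynorm_c2 _ p) (tge j).
  - rewrite ger0_norm; [exact: (le_trans (hmu1 _).2 U1) | exact: ltW (hmu1 _).1].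
  - rewrite ger0_norm; [exact: (le_trans (hmu1 _).2 U1) | exact: ltW (hmu1 _).1].
  - apply: (le_trans _ U2); rewrite /I1b; case: asboolP => hI; last by rewrite normr0.
    have e2 : (ys j p).2 = 0 by exact: y2_I1 hI (hy j p).2.
    have ez : vnorm (z j p) = `|(ys j p).1| * vnorm (u j p).
      by rewrite /z e2 scale0r addr0 vnormZ.
    have h0 : 0 <= 1 + vnorm (u j p) by rewrite addr_ge0 ?vnorm_ge0.
    rewrite normrM normfV (gtr0_norm (tpos j)) normrM (ger0_norm h0) mulrDr mulr1.
    rewrite ler_pdivrMr // -ez.
    have := zle j p; have := le_trans (ynorm_c1 _ p) (tge j); lra.
  - apply: le_trans ((hBT' p).2 j) _.
    apply: le_trans (@le_sum_term _ _ BT p (fun q => (hBT' q).1)) _.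
    by rewrite /U lerDr.
  - by apply: (le_trans _ U1); apply: hdiv; apply: le_trans (coord_le_vnorm _ i) (zle j p).
  - exact: le_trans (hmuv _ i) U1.
  - exact: le_trans (hmuv _ i) U1.
have [phi [sphi [L hL]]] := BWfin ha.
pose q := s \o phi.
have sq : strict q := strict_comp ss sphi.
have tauphi j : j.+1%:R <= tau (phi j).
  apply: ltW; apply: le_lt_trans (lt_le_trans (hyn (phi j)) (tge (phi j))).
  rewrite ler_nat ltnS; exact: strict_ge.
pose y1h p := L (inl (p, @Ordinal 6 0 isT)).
pose y2h p := L (inl (p, @Ordinal 6 1 isT)).
pose muh p := L (inl (p, @Ordinal 6 2 isT)).
pose mwh p := L (inl (p, @Ordinal 6 3 isT)).
pose ch p := L (inl (p, @Ordinal 6 4 isT)).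
pose th p := L (inl (p, @Ordinal 6 5 isT)).
pose zh p := \row_i L (inr (p, i, @Ordinal 3 0 isT)).
pose duh p := \row_i L (inr (p, i, @Ordinal 3 1 isT)).
pose dwh p := \row_i L (inr (p, i, @Ordinal 3 2 isT)).
have cY1 p : rcvg (fun j => (ys (phi j) p).1 / tau (phi j)) (y1h p) := hL (inl (p, @Ordinal 6 0 isT)).
have cY2 p : rcvg (fun j => (ys (phi j) p).2 / tau (phi j)) (y2h p) := hL (inl (p, @Ordinal 6 1 isT)).
have cMu p : rcvg (fun j => muu (phi j) p) (muh p) := hL (inl (p, @Ordinal 6 2 isT)).
have cMw p : rcvg (fun j => muw (phi j) p) (mwh p) := hL (inl (p, @Ordinal 6 3 isT)).
have cC p : rcvg (fun j => if I1b p then (ys (phi j) p).1 * (1 + vnorm (u (phi j) p)) / tau (phi j) else 0) (ch p)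
  := hL (inl (p, @Ordinal 6 4 isT)).
have cT p : rcvg (fun j => Tk M (q j) p) (th p) := hL (inl (p, @Ordinal 6 5 isT)).
have cZ p i : rcvg (fun j => z (phi j) p 0 i / tau (phi j)) (zh p 0 i).
  rewrite mxE; exact: hL (inr (p, i, @Ordinal 3 0 isT)).
have cDu p i : rcvg (fun j => muu (phi j) p * u (phi j) p 0 i) (duh p 0 i).
  rewrite mxE; exact: hL (inr (p, i, @Ordinal 3 1 isT)).
have cDw p i : rcvg (fun j => muw (phi j) p * w (phi j) p 0 i) (dwh p 0 i).
  rewrite mxE; exact: hL (inr (p, i, @Ordinal 3 2 isT)).
have y2z p : y2h p = 0.
  apply: (rcvg_unique (cY2 p)).
  apply: (rcvg_ext _ (bdd_over_tau (x := fun j => (ys (phi j) p).2) (C := Cf p) _ tauphi)) => // j.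
  exact: ((hCf p).2 (phi j)).2.
have y1z p : is_obj P p -> y1h p = 0.
  move=> hp; apply: (rcvg_unique (cY1 p)).
  apply: (rcvg_ext _ (bdd_over_tau (x := fun j => (ys (phi j) p).1) (C := Cf p) _ tauphi)) => // j.
  exact: ((hCf p).2 (phi j)).1 hp.
have tau1 j : 1 <= tau (phi j) by apply: le_trans (tauphi j); rewrite ler1n.
have zsum i : \sum_p zh p 0 i = 0.
  have e j : \sum_p (z (phi j) p 0 i / tau (phi j)) + r_lam M * (xpp M (q j) 0 i - xp M (q j) 0 i) / tau (phi j) = 0.
    transitivity ((\sum_p ((ys (phi j) p).1 * u (phi j) p 0 i + (ys (phi j) p).2 * w (phi j) p 0 i)
        + r_lam M * (xpp M (q j) 0 i - xp M (q j) 0 i)) / tau (phi j)); last first.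
      by rewrite ((huws (phi j)).2 i) mul0r.
    rewrite mulrDl mulr_suml; congr (_ + _); apply: eq_bigr => p _; by rewrite /z !mxE.
  have hnull : rcvg (fun j => r_lam M * (xpp M (q j) 0 i - xp M (q j) 0 i) / tau (phi j)) 0.
    apply: (rcvg_squeeze0 (v := fun j => r_lam M * rho M (q j))).
      by have := rcvg_mul (rcvg_cst (r_lam M)) (rcvg_sub sq (rho_cvg H)); rewrite mulr0.
    exists 0%N => j _; have l0 := lam_gt0 H; have t0 := tpos (phi j).
    rewrite normrM normfV (gtr0_norm t0) normrM (gtr0_norm l0).
    have h1 : `|xpp M (q j) 0 i - xp M (q j) 0 i| <= rho M (q j).
      by apply: le_trans (R8 H (q j)); have := coord_le_vnorm (xpp M (q j) - xp M (q j)) i; rewrite !mxE.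
    rewrite ler_pdivrMr // -mulrA ler_pM2l //; apply: le_trans h1 _.
    by rewrite ler_peMr ?rho_ge0.
  have hc : forall p, xpredT p -> rcvg (fun j => z (phi j) p 0 i / tau (phi j)) (zh p 0 i) by move=> p _; exact: cZ.
  have h1 := rcvg_add (rcvg_sum (index_enum 'I_m) hc) hnull.
  have h0 := rcvg_ext (fun j => esym (e j)) (rcvg_cst 0).
  by have := rcvg_unique h1 h0; rewrite addr0.
have hlow j : 1 <= \sum_p (`|(ys (phi j) p).1 / tau (phi j)| + `|(ys (phi j) p).2 / tau (phi j)|)
                  + \sum_p \sum_i `|z (phi j) p 0 i / tau (phi j)|.
  set t := tau (phi j); have t0 : 0 < t := tpos (phi j).
  have ed (x : R) : `|x / t| = `|x| * t^-1 by rewrite normrM normfV (gtr0_norm t0).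
  have h : t <= \sum_p (`|(ys (phi j) p).1| + `|(ys (phi j) p).2|) + \sum_p \sum_i `|z (phi j) p 0 i|.
    rewrite /t /tau; apply: lerD; first exact: ynorm_le.
    by apply: ler_sum => p _; exact: vnorm_le_sum.
  have e1 : \sum_p (`|(ys (phi j) p).1 / t| + `|(ys (phi j) p).2 / t|) + \sum_p \sum_i `|z (phi j) p 0 i / t|
     = (\sum_p (`|(ys (phi j) p).1| + `|(ys (phi j) p).2|) + \sum_p \sum_i `|z (phi j) p 0 i|) / t.
    rewrite mulrDl !mulr_suml; congr (_ + _); apply: eq_bigr => p _; first by rewrite mulrDl !ed.
    by rewrite mulr_suml; apply: eq_bigr => i _; rewrite ed.
  by rewrite e1 ler_pdivlMr // mul1r.
have hlim : rcvg (fun j => \sum_p (`|(ys (phi j) p).1 / tau (phi j)| + `|(ys (phi j) p).2 / tau (phi j)|)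
                  + \sum_p \sum_i `|z (phi j) p 0 i / tau (phi j)|)
   (\sum_p (`|y1h p| + `|y2h p|) + \sum_p \sum_i `|zh p 0 i|).
  apply: rcvg_add; apply: rcvg_sum => p _.
    by apply: rcvg_add; apply: rcvg_norm; [exact: cY1 | exact: cY2].
  by apply: rcvg_sum => i _; apply: rcvg_norm; exact: cZ.
have one := rcvg_ge_ev hlim (ex_intro _ 0%N (fun j _ => hlow j)).
have hxq' := vcvg_sub sphi hx'.
have hxq'' := vcvg_sub sphi hx''.
have hpair : forall p, exists YV : R * vec,
   (((exists t, Tset P p xbar t /\ ncone (edom (Phi P p)) t YV.1) /\ conv_hull (dA P p xbar) YV.2) \/
    (dAinf P p xbar YV.2 /\ YV.2 <> 0)) /\
   (forall i, zh p 0 i = YV.1 * YV.2 0 i) /\ (YV.1 = 0 -> (forall i, zh p 0 i = 0) /\ y1h p = 0).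
  move=> p.
  have hTs : Tset P p xbar (th p).
    have [xs [hxs hq]] := vext sq hxq''.
    exists q; split => //; exists xs; split => //.
    by apply: rcvg_ext (cT p) => j; rewrite hq.
  have hpu : vcvg (fun j => (apx (phi j) p).1.1.1) xbar.
    apply: vcvg_either hxq' hxq'' _ => j; exact: (hapx (phi j) p).1.
  have hpw : vcvg (fun j => (apx (phi j) p).1.2) xbar.
    apply: vcvg_either hxq' hxq'' _ => j; exact: (hapx (phi j) p).2.2.2.1.
  have hdel : rcvg (fun j => 2 * r_del M (q j)) 0.
    by have := rcvg_mul (rcvg_cst 2) (rcvg_sub sq (del_cvg H)); rewrite mulr0.
  have hnu : rcvg (fun j => vnorm (u (phi j) p - (apx (phi j) p).1.1.2)) 0.
    apply: (rcvg_squeeze0 hdel).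
    exists 0%N => j _; rewrite ger0_norm ?vnorm_ge0 //; exact: (hapx (phi j) p).2.2.1.
  have hnw : rcvg (fun j => vnorm (w (phi j) p - (apx (phi j) p).2)) 0.
    apply: (rcvg_squeeze0 hdel).
    exists 0%N => j _; rewrite ger0_norm ?vnorm_ge0 //; exact: (hapx (phi j) p).2.2.2.2.2.
  have hdu := dich sq hpu (fun j => (hapx (phi j) p).2.1) hnu (mu := fun j => muu (phi j) p)
     (fun j => erefl) (cMu p) (cDu p).
  have hdw := dich sq hpw (fun j => (hapx (phi j) p).2.2.2.2.1) hnw (mu := fun j => muw (phi j) p)
     (fun j => erefl) (cMw p) (cDw p).
  have hch : forall v : vec, dA P p xbar v -> conv_hull (dA P p xbar) v.
    move=> v hv; exists 1%N, (fun _ => 1), (fun _ => v); split => //; split => //.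
    by rewrite !big_ord1 scale1r.
  have t0 j : tau (phi j) != 0 by rewrite gt_eqF // tpos.
  have u0 j : 1 + vnorm (u (phi j) p) != 0 by rewrite gt_eqF // ltr_wpDr // vnorm_ge0.
  case: (pselect (I1 P p)) => hI.
  - have e2 j : (ys j p).2 = 0 := y2_I1 hI (hy j p).2.
    have ez j i : z j p 0 i = (ys j p).1 * u j p 0 i by rewrite /z !mxE e2 mul0r addr0.
    have hI1b : I1b p = true by rewrite /I1b; exact/asboolT.
    case: hdu => [[mh0 [hinf hnz]] | [v [hv cu]]].
    + exists (ch p, duh p); split; first by right.
      have ezd i : zh p 0 i = ch p * duh p 0 i.
        apply: (rcvg_unique (cZ p i)); apply: rcvg_ext (rcvg_mul (cC p) (cDu p i)) => j.
        rewrite hI1b ez /muu; field.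
        by apply/andP; split; [exact: t0 | exact: u0].
      split => // /= c0; split; first by move=> i; rewrite ezd c0 mul0r.
      apply: (rcvg_unique (cY1 p)); have := rcvg_mul (cC p) (cMu p); rewrite mh0 mulr0.
      apply: rcvg_ext => j; rewrite hI1b /muu; field.
      by apply/andP; split; [exact: t0 | exact: u0].
    + have ezd i : zh p 0 i = y1h p * v 0 i.
        apply: (rcvg_unique (cZ p i)); apply: rcvg_ext (rcvg_mul (cY1 p) (cu i)) => j.
        by rewrite ez mulrAC.
      exists (y1h p, v); split; last first.
        split; first exact: ezd.
        by move=> /= c0; split => // i; rewrite ezd c0 mul0r.
      left; split; last exact: hch v hv.
      exists (th p); split => //.
      case hp: (is_obj P p); first by rewrite /= y1z //; apply: ncone0; exact: edom_obj.
      have hpn : ~~ is_obj P p by rewrite hp.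
      have thle : th p <= - 0.
        apply: (rcvg_le (cT p) (rcvg_opp (rcvg_sub sq (sig_cvg H p)))).
        exists 0%N => j _ /=; have := R3 H (q j) p; have := R7 H (q j) hpn; lra.
      rewrite oppr0 in thle.
      have hfup : rcvg (fun j => fupk M (q j) p) (th p).
        have hd : rcvg (fun j => fupk M (q j) p - Tk M (q j) p) 0.
          apply: (rcvg_squeeze0 (v := fun j => `|r_sigma M p (q j)| + r_eps M (q j))).
            have := rcvg_add (rcvg_norm (rcvg_sub sq (sig_cvg H p))) (rcvg_sub sq (eps_cvg H)).
            by rewrite normr0 addr0.
          exists 0%N => j _; have := R3 H (q j) p; have := R4 H (q j) p.
          have := ler_norm (r_sigma M p (q j)); have := ler_norm (- r_sigma M p (q j)).
          rewrite normrN ler_norml => *; apply/andP; split; lra.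
        have := rcvg_add (cT p) hd; rewrite addr0; apply: rcvg_ext => j; ring.
      split; first by apply/edom_con.
      move=> s0 hs0; have hs0' : s0 <= 0 by apply/(edom_con _ hpn).
      apply: (rcvg_le_ev (rcvg_mul (cY1 p) (rcvg_add (rcvg_cst s0) (rcvg_opp hfup)))).
      exists 0%N => j _; have [_ h] := y1_con hpn (hy (phi j) p).1.
      rewrite mulrAC; apply: mulr_le0_ge0 (h s0 hs0') _; rewrite invr_ge0 ltW // tpos.
  - case hp: (is_obj P p); last by exfalso; apply: hI; apply: I1_con; rewrite hp.
    have hz0 : forall v', dAinf P p xbar v' -> v' = 0 by move=> v' hv; rewrite (hdA' p hI) in hv.
    case: hdu => [[_ [hinf hnz]] | [v [hv cu]]]; first by exfalso; exact: hnz (hz0 _ hinf).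
    case: hdw => [[_ [hinf' hnz']] | [v' [hv' cw]]]; first by exfalso; exact: hnz' (hz0 _ hinf').
    have ezd i : zh p 0 i = 0.
      apply: (rcvg_unique (cZ p i)).
      have := rcvg_add (rcvg_mul (cY1 p) (cu i)) (rcvg_mul (cY2 p) (cw i)).
      rewrite y1z // y2z !mul0r addr0; apply: rcvg_ext => j; rewrite /z !mxE; field.
      exact: t0.
    exists (0, v); split.
      left; split; last exact: hch v hv.
      by exists (th p); split => //; apply: ncone0; exact: edom_obj.
    split; first by move=> i; rewrite ezd mul0r.
    by move=> _; split => //; rewrite y1z.
have [YV hYV] := choice hpair.
have hsum : \sum_p (YV p).1 *: (YV p).2 = 0.
  apply/rowP => i; rewrite summxE [RHS]mxE.
  transitivity (\sum_p zh p 0 i); last exact: zsum i.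
  by apply: eq_bigr => p _; rewrite (hYV p).2.1 [LHS]mxE.
have hz := H_A5 H hdom (fun p => (hYV p).1) hsum.
have hz1 : \sum_p (`|y1h p| + `|y2h p|) = 0.
  apply: big1 => p _; have [_ h] := (hYV p).2.2 (hz p).
  by rewrite h y2z normr0 addr0.
have hz2 : \sum_p \sum_i `|zh p 0 i| = 0.
  apply: big1 => p _; apply: big1 => i _; have [h _] := (hYV p).2.2 (hz p).
  by rewrite h normr0.
by move: one; rewrite hz1 hz2 addr0 ler10.
Qed.

End Core.

Lemma vcvg_ext {R : realType} {n : nat} (a b : nat -> 'rV[R]_n) x :
  vcvg a x -> (forall j, a j = b j) -> vcvg b x.
Proof. by move=> h e; have -> : b = a by apply: funext => j; rewrite e. Qed.

Section Tail.
Context {R : realType} {n : nat} (P : cp1 R n) (M : adc_run R n (cp_m P)).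
Hypothesis H : AllHyps P M.
Local Notation m := (cp_m P).
Local Notation vec := 'rV[R]_n.

Lemma tail (s : nat -> nat) : strict s ->
  (forall phi, strict phi -> exists psi, strict psi /\ exists xbar,
      vcvg (fun j => r_X M (s (phi (psi j))).+1) xbar /\
      (dom_all P xbar -> forall p, I2 P p -> dAinf P p xbar = [set 0])) ->
  exists B, forall j y, Yset P M (s j) y -> ynorm y <= B.
Proof.
move=> ss Hsub.
case: (pselect (exists B, forall j y, Yset P M (s j) y -> ynorm y <= B)) => // hn; exfalso.
have [Bk hBk] := choice (perk H).
have hF : forall iJ : nat * nat, exists jy : nat * ('I_m -> R * R),
    (iJ.2 < jy.1)%N /\ Yset P M (s jy.1) jy.2 /\ iJ.1.+1%:R < ynorm jy.2.
  move=> [i J] /=; apply: contrapT => hno; apply: hn.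
  exists (Num.max i.+1%:R (\sum_(j < J.+1) `|Bk (s j)|)) => j y hy.
  case: (leqP j J) => hj.
    apply: le_trans (hBk _ _ hy) _; rewrite le_max; apply/orP; right.
    apply: le_trans (ler_norm _) _.
    have hj' : (j < J.+1)%N by rewrite ltnS.
    exact: (@le_sum_term _ _ (fun j : 'I_J.+1 => `|Bk (s j)|) (Ordinal hj') (fun _ => normr_ge0 _)).
  rewrite le_max; apply/orP; left; rewrite leNgt; apply/negP => hlt; apply: hno.
  by exists (j, y).
have [F hF'] := choice hF.
pose jj := fix jj i := match i with 0 => (F (0, 0))%N.1 | i'.+1 => (F (i'.+1, jj i')).1 end.
have sjj : strict jj by move=> i /=; exact: (hF' (i.+1, jj i)).1.
pose yy i := (F (i, match i with 0 => 0%N | i'.+1 => jj i' end)).2.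
have hyy i : Yset P M (s (jj i)) (yy i) /\ i.+1%:R < ynorm (yy i).
  by case: i => [|i] /=; [exact: (hF' (0, 0)%N).2 | exact: (hF' (i.+1, jj i)).2].
have [psi [spsi [xbar [hconv hdA]]]] := Hsub jj sjj.
apply: (core H (s := s \o jj \o psi) (xbar := xbar) (ys := yy \o psi)).
- exact: strict_comp (strict_comp ss sjj) spsi.
- exact: (vcvg_ext hconv (fun j => X_xp H _)).
- exact: hdA.
- by move=> j; exact: (hyy (psi j)).1.
- move=> j; apply: le_lt_trans (hyy (psi j)).2; rewrite ler_nat ltnS; exact: strict_ge.
Qed.

End Tail.

Unset Implicit Arguments.

Theorem proposition4p5 (R : realType) (n : nat) (P : cp1 R n) (M : adc_run R n (cp_m P))
  (Hm1 : (cp_m1 P <= cp_m P)%N)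
  (Hphi : forall p, is_obj P p -> convex_rfun (cp_phi P p))
  (HA1 : Assumption1 P)
  (HA2 : Assumption2 P (r_X M 0) (r_ahat M))
  (HA3 : Assumption3 P (r_ell M))
  (HA4 : Assumption4 P)
  (HA5 : Assumption5 P)
  (HA6 : Assumption6 P (r_sigma M) (r_lam M))
  (Hpar : method_params P M)
  (Hsig : sigma_def P M)
  (Hgen : generated P M) :
  (* (a) *)
  (forall (s : nat -> nat) (xbar : 'rV[R]_n),
     subseq_idx s ->
     vcvg (fun j => r_X M (s j).+1) xbar ->
     (forall p, I2 P p -> dAinf P p xbar = [set 0]) ->
     exists B : R, forall j y, Yset P M (s j) y -> ynorm y <= B) /\
  (* (b) *)
  ((exists B : R, forall k, vnorm (r_X M k) <= B) ->
   (forall x, dom_all P x -> forall p, I2 P p -> dAinf P p x = [set 0]) ->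
   exists D : R, forall k y, Yset P M k y -> ynorm y <= D).
Proof.
have H : AllHyps P M.
  exact: (conj Hphi (conj HA1 (conj HA2 (conj HA3 (conj HA5 (conj HA6 (conj Hpar (conj Hsig Hgen)))))))).
split.
- move=> s xbar ss hconv hI2; apply: (tail H ss) => phi sphi.
  exists id; split => //; exists xbar; split => //.
  exact: (vcvg_sub (xs := fun j => r_X M (s j).+1) sphi hconv).
- move=> [B hB] hb.
  have [D hD] : exists B, forall j y, Yset P M (id j) y -> ynorm y <= B.
    apply: (tail H (s := id) (fun j => ltnSn j)) => phi sphi.
    have [psi [spsi [xbar hx]]] := vBW (v := fun j => r_X M (phi j).+1) (fun j => hB _).
    exists psi; split => //; exists xbar; split => //.
    exact: hb.
  by exists D.
Qed.
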